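(* Let $T$ be a reflection factorization of length $\ell\ge 5$ generating $G_5$. If at least two reflections from some reflection conjugacy class $K\in\{R_1,R_1^{-1},R_2,R_2^{-1}\}$ of $G_5$ appear in $T$, then for all $x\in K$ there exists a factorization $T'$, Hurwitz equivalent to $T$, of the form $(r_1,\dots,r_{\ell-1},x)$ such that $r_1,\dots,r_{\ell-1}$ generate $G_5$.
   Context: Let $G_7$ be the subgroup of $GL_2(\mathbb{C})$ generated by $s=\begin{bmatrix}1&0\\0&-1\end{bmatrix}$, $t=\frac14\begin{bmatrix}(1+\sqrt3)+(-1+\sqrt3)i & (1+\sqrt3)+(-1+\sqrt3)i\\ (-1+\sqrt3)-(1+\sqrt3)i & (1-\sqrt3)+(1+\sqrt3)i\end{bmatrix}$ and $u=t^{\top}$ (presentation $\langle s,t,u\mid s^2=t^3=u^3=1,\ stu=ust=tus\rangle$, order $144$). A reflection is a linear map of $\mathbb{C}^2$ whose fixed space has dimension $1$. Let $R_1$, $R_2$ be the $G_7$-conjugacy classes of $t$, $u$ respectively (each four reflections of order $3$), and $R_j^{-1}=\{r^{-1}:r\in R_j\}$. Let $G_5=\langle t,u\rangle$, of order $72$; its reflections are the sixteen elements of $R_1\cup R_1^{-1}\cup R_2\cup R_2^{-1}$ and these four sets are its reflection conjugacy classes. A reflection factorization of length $\ell$ is a tuple $(r_1,\dots,r_\ell)$ of reflections; it generates $\langle r_1,\dots,r_\ell\rangle$. The Hurwitz move $\sigma_i$ sends $(r_1,\dots,r_\ell)$ to $(r_1,\dots,r_{i-1},r_{i+1},r_{i+1}^{-1}r_ir_{i+1},r_{i+2},\dots,r_\ell)$;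 two factorizations are Hurwitz equivalent if one is obtained from the other by a finite sequence of Hurwitz moves. *)

(* Defs.v *)
From HB Require Import structures.
From mathcomp Require Import all_boot all_order all_algebra.
From mathcomp Require Import algC.
Set Implicit Arguments. Unset Strict Implicit. Unset Printing Implicit Defensive.
Import Order.TTheory GRing.Theory Num.Theory.
Local Open Scope ring_scope.

(* Complex numbers are modelled by algC (algebraic complex
   numbers), which contain all entries of s, t, u. *)

Notation M := 'M[algC]_2.

Definition mx2 (a b c d : algC) : M :=
  \matrix_(i < 2, j < 2)
    if i == 0 then (if j == 0 then a else b) else (if j == 0 then c else d).

Definition sq3 : algC := sqrtC 3.

Definition s_mx : M := mx2 1 0 0 (-1).

Definition t_mx : M :=
  4^-1 *: mx2 ((1 + sq3) + (-1 + sq3) * 'i) ((1 + sq3) + (-1 + sq3) * 'i)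
              ((-1 + sq3) - (1 + sq3) * 'i) ((1 - sq3) + (1 + sq3) * 'i).

Definition u_mx : M := t_mx^T.

Definition reflection (A : M) : Prop :=
  A \in unitmx /\ \rank (A - 1%:M) = 1%N.

Inductive generated (gens : seq M) : M -> Prop :=
  | gen_one : generated gens 1
  | gen_mul x g : x \in gens -> generated gens g -> generated gens (x * g)
  | gen_mulV x g : x \in gens -> generated gens g -> generated gens (x^-1 * g).

Definition G7 : M -> Prop := generated [:: s_mx; t_mx; u_mx].
Definition G5 : M -> Prop := generated [:: t_mx; u_mx].

Definition generates (gens : seq M) (H : M -> Prop) : Prop :=
  forall A, generated gens A <-> H A.

Definition R1 (x : M) : Prop := exists g, G7 g /\ x = g^-1 * t_mx * g.
Definition R2 (x : M) : Prop := exists g, G7 g /\ x = g^-1 * u_mx * g.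
Definition R1inv (x : M) : Prop := R1 x^-1.
Definition R2inv (x : M) : Prop := R2 x^-1.

Definition refl_fact (T : seq M) : Prop := forall r, r \in T -> reflection r.

(* Hurwitz move sigma_{i+1} (0-indexed i, i + 1 < size T):
   (.., r_i, r_{i+1}, ..) |-> (.., r_{i+1}, r_{i+1}^-1 r_i r_{i+1}, ..) *)
Definition hurwitz_move (i : nat) (T : seq M) : seq M :=
  let a := nth 0 T i in let b := nth 0 T i.+1 in
  take i T ++ [:: b; b^-1 * a * b] ++ drop i.+2 T.

Inductive hurwitz_reach : seq M -> seq M -> Prop :=
  | hr_refl T : hurwitz_reach T T
  | hr_step i T T' : (i.+1 < size T)%N -> hurwitz_reach (hurwitz_move i T) T' ->
                     hurwitz_reach T T'.

Definition hurwitz_equiv (T T' : seq M) : Prop :=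
  hurwitz_reach T T' \/ hurwitz_reach T' T.

(* Main.v *)
Require Import Defs.
From HB Require Import structures.
From mathcomp Require Import all_boot all_order all_algebra.
From mathcomp Require Import algC.
From mathcomp Require Import ring zify.
Set Implicit Arguments. Unset Strict Implicit. Unset Printing Implicit Defensive.
Import Order.TTheory GRing.Theory Num.Theory.
Local Open Scope ring_scope.

(* Proof strategy: an exact computational model of G7 (144
   matrices with entries in (1/4) Z[sqrt 3, i]) mapped homomorphically into
   'M[algC]_2; the finite group-theoretic facts are checked by vm_compute,
   and the Hurwitz-move combinatorics is reduced (by moving chosen reflections
   to the front, and the last one to the end) to finite certificate checks on
   blocks of length 4 or 5. *)


Definition zq := (int * int * int * int)%type.
Definition zmx := (zq * zq * zq * zq)%type.
Definition zqadd (x y : zq) : zq :=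
  let: (a0,a1,a2,a3) := x in let: (b0,b1,b2,b3) := y in (a0+b0, a1+b1, a2+b2, a3+b3).
Definition zqmul (x y : zq) : zq :=
  let: (a0,a1,a2,a3) := x in let: (b0,b1,b2,b3) := y in
  (a0*b0 + 3*(a1*b1) - a2*b2 - 3*(a3*b3),
   a0*b1 + a1*b0 - a2*b3 - a3*b2,
   a0*b2 + a2*b0 + 3*(a1*b3) + 3*(a3*b1),
   a0*b3 + a3*b0 + a1*b2 + a2*b1).
Definition zqscale (k : int) (x : zq) : zq :=
  let: (a0,a1,a2,a3) := x in (k*a0, k*a1, k*a2, k*a3).
Definition zmxmul (A B : zmx) : zmx :=
  let: (a,b,c,d) := A in let: (a',b',c',d') := B in
  (zqadd (zqmul a a') (zqmul b c'), zqadd (zqmul a b') (zqmul b d'),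
   zqadd (zqmul c a') (zqmul d c'), zqadd (zqmul c b') (zqmul d d')).
Definition zmxscale (k : int) (A : zmx) : zmx :=
  let: (a,b,c,d) := A in (zqscale k a, zqscale k b, zqscale k c, zqscale k d).

Definition iota4 (x : zq) : algC :=
  let: (a0,a1,a2,a3) := x in
  a0%:~R + a1%:~R * sq3 + a2%:~R * 'i + a3%:~R * ('i * sq3).

Lemma sq3sq : sq3 * sq3 = 3.
Proof. by rewrite /sq3 -expr2 sqrtCK. Qed.

Lemma iota4D x y : iota4 (zqadd x y) = iota4 x + iota4 y.
Proof.
case: x => [[[a0 a1] a2] a3]; case: y => [[[b0 b1] b2] b3] /=.
rewrite !intrD; ring.
Qed.

Lemma iota4S k x : iota4 (zqscale k x) = k%:~R * iota4 x.
Proof.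
case: x => [[[a0 a1] a2] a3] /=.
rewrite !intrM; ring.
Qed.

Lemma iota4M x y : iota4 (zqmul x y) = iota4 x * iota4 y.
Proof.
case: x => [[[a0 a1] a2] a3]; case: y => [[[b0 b1] b2] b3] /=.
rewrite !(intrD, intrB, intrM).
set r := sq3. have Hr : r * r = 3 by exact: sq3sq.
have Hi : 'i * 'i = -1 :> algC by exact: mulCii.
set i := 'i.
set A0 := a0%:~R; set A1 := a1%:~R; set A2 := a2%:~R; set A3 := a3%:~R.
set B0 := b0%:~R; set B1 := b1%:~R; set B2 := b2%:~R; set B3 := b3%:~R.
rewrite ?[(3 : int)%:~R]/intmul /=.
apply/eqP; rewrite -subr_eq0; apply/eqP.
transitivity (- ((r * r - 3) * (A1*B1 + (A1*B3 + A3*B1) * i + A3*B3*(i*i))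
   + (i*i + 1) * (A2*B2 + (A2*B3 + A3*B2) * r + 3 * A3*B3))).
  ring.
by rewrite Hr Hi; ring.
Qed.

Definition psi (A : zmx) : M :=
  let: (a,b,c,d) := A in mx2 (iota4 a) (iota4 b) (iota4 c) (iota4 d).

Lemma mx2_mul a b c d a' b' c' d' :
  mx2 a b c d *m mx2 a' b' c' d' = mx2 (a*a' + b*c') (a*b' + b*d') (c*a' + d*c') (c*b' + d*d').
Proof.
apply/matrixP => i j; rewrite !mxE !big_ord_recl big_ord0 !mxE /=.
by case: i => [[|[|//]] ?]; case: j => [[|[|//]] ?]; rewrite /= addr0.
Qed.

Lemma mx2_scale k a b c d : k *: mx2 a b c d = mx2 (k*a) (k*b) (k*c) (k*d).
Proof.
apply/matrixP => i j; rewrite !mxE.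
by case: i => [[|[|//]] ?]; case: j => [[|[|//]] ?].
Qed.

Lemma psiM A B : psi (zmxmul A B) = psi A *m psi B.
Proof.
case: A => [[[a b] c] d]; case: B => [[[a' b'] c'] d'] /=.
by rewrite mx2_mul !iota4D !iota4M.
Qed.

Lemma psiS k A : psi (zmxscale k A) = k%:~R *: psi A.
Proof.
case: A => [[[a b] c] d] /=.
by rewrite mx2_scale !iota4S.
Qed.

Definition phiz (A : zmx) : M := 4^-1 *: psi A.

Lemma phizM A B C : zmxmul A B = zmxscale 4 C -> phiz A *m phiz B = phiz C.
Proof.
move=> H; rewrite /phiz -scalemxAl -scalemxAr scalerA -psiM H psiS scalerA.
congr (_ *: _).
have h4 : (4 : algC) != 0 by rewrite pnatr_eq0.
rewrite -mulrA [(4 : int)%:~R]/intmul /=.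
by field.
Qed.

Definition els : seq zmx := [:: (((Posz 4), (Posz 0), (Posz 0), (Posz 0)), ((Posz 0), (Posz 0), (Posz 0), (Posz 0)), ((Posz 0), (Posz 0), (Posz 0), (Posz 0)), ((Posz 4), (Posz 0), (Posz 0), (Posz 0)));
  (((Posz 1), (Posz 1), (Negz 0), (Posz 1)), ((Posz 1), (Posz 1), (Negz 0), (Posz 1)), ((Negz 0), (Posz 1), (Negz 0), (Negz 0)), ((Posz 1), (Negz 0), (Posz 1), (Posz 1)));
  (((Posz 1), (Posz 1), (Negz 0), (Posz 1)), ((Negz 0), (Posz 1), (Negz 0), (Negz 0)), ((Posz 1), (Posz 1), (Negz 0), (Posz 1)), ((Posz 1), (Negz 0), (Posz 1), (Posz 1)));
  (((Posz 4), (Posz 0), (Posz 0), (Posz 0)), ((Posz 0), (Posz 0), (Posz 0), (Posz 0)), ((Posz 0), (Posz 0), (Posz 0), (Posz 0)), ((Negz 3), (Posz 0), (Posz 0), (Posz 0)));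
  (((Posz 1), (Posz 1), (Posz 1), (Negz 0)), ((Negz 0), (Posz 1), (Posz 1), (Posz 1)), ((Posz 1), (Posz 1), (Posz 1), (Negz 0)), ((Posz 1), (Negz 0), (Negz 0), (Negz 0)));
  (((Posz 0), (Posz 0), (Posz 0), (Posz 0)), ((Posz 0), (Posz 2), (Posz 2), (Posz 0)), ((Posz 0), (Posz 2), (Posz 2), (Posz 0)), ((Posz 0), (Posz 0), (Posz 0), (Posz 0)));
  (((Posz 1), (Posz 1), (Negz 0), (Posz 1)), ((Posz 1), (Posz 1), (Negz 0), (Posz 1)), ((Posz 1), (Negz 0), (Posz 1), (Posz 1)), ((Negz 0), (Posz 1), (Negz 0), (Negz 0)));
  (((Posz 0), (Posz 2), (Posz 2), (Posz 0)), ((Posz 0), (Posz 0), (Posz 0), (Posz 0)), ((Posz 0), (Posz 0), (Posz 0), (Posz 0)), ((Posz 0), (Negz 1), (Negz 1), (Posz 0)));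
  (((Posz 1), (Posz 1), (Posz 1), (Negz 0)), ((Posz 1), (Posz 1), (Posz 1), (Negz 0)), ((Negz 0), (Posz 1), (Posz 1), (Posz 1)), ((Posz 1), (Negz 0), (Negz 0), (Negz 0)));
  (((Posz 1), (Posz 1), (Negz 0), (Posz 1)), ((Negz 0), (Posz 1), (Negz 0), (Negz 0)), ((Negz 0), (Negz 0), (Posz 1), (Negz 0)), ((Negz 0), (Posz 1), (Negz 0), (Negz 0)));
  (((Posz 1), (Posz 1), (Negz 0), (Posz 1)), ((Negz 0), (Negz 0), (Posz 1), (Negz 0)), ((Negz 0), (Posz 1), (Negz 0), (Negz 0)), ((Negz 0), (Posz 1), (Negz 0), (Negz 0)));
  (((Posz 1), (Posz 1), (Negz 0), (Posz 1)), ((Posz 1), (Negz 0), (Posz 1), (Posz 1)), ((Posz 1), (Posz 1), (Negz 0), (Posz 1)), ((Negz 0), (Posz 1), (Negz 0), (Negz 0)));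
  (((Posz 2), (Posz 0), (Negz 1), (Posz 0)), ((Negz 1), (Posz 0), (Posz 2), (Posz 0)), ((Posz 2), (Posz 0), (Posz 2), (Posz 0)), ((Posz 2), (Posz 0), (Posz 2), (Posz 0)));
  (((Posz 1), (Posz 1), (Posz 1), (Negz 0)), ((Negz 0), (Posz 1), (Posz 1), (Posz 1)), ((Negz 0), (Negz 0), (Negz 0), (Posz 1)), ((Negz 0), (Posz 1), (Posz 1), (Posz 1)));
  (((Posz 2), (Posz 0), (Posz 2), (Posz 0)), ((Posz 2), (Posz 0), (Posz 2), (Posz 0)), ((Negz 1), (Posz 0), (Posz 2), (Posz 0)), ((Posz 2), (Posz 0), (Negz 1), (Posz 0)));
  (((Posz 2), (Posz 0), (Negz 1), (Posz 0)), ((Posz 2), (Posz 0), (Posz 2), (Posz 0)), ((Negz 1), (Posz 0), (Posz 2), (Posz 0)), ((Posz 2), (Posz 0), (Posz 2), (Posz 0)));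
  (((Posz 0), (Posz 0), (Posz 0), (Posz 0)), ((Posz 0), (Posz 2), (Posz 2), (Posz 0)), ((Posz 0), (Negz 1), (Negz 1), (Posz 0)), ((Posz 0), (Posz 0), (Posz 0), (Posz 0)));
  (((Negz 0), (Posz 1), (Posz 1), (Posz 1)), ((Posz 1), (Posz 1), (Posz 1), (Negz 0)), ((Posz 1), (Negz 0), (Negz 0), (Negz 0)), ((Posz 1), (Posz 1), (Posz 1), (Negz 0)));
  (((Posz 0), (Posz 2), (Posz 2), (Posz 0)), ((Posz 0), (Posz 0), (Posz 0), (Posz 0)), ((Posz 0), (Posz 0), (Posz 0), (Posz 0)), ((Posz 0), (Posz 2), (Posz 2), (Posz 0)));
  (((Posz 2), (Posz 0), (Posz 2), (Posz 0)), ((Negz 1), (Posz 0), (Negz 1), (Posz 0)), ((Posz 2), (Posz 0), (Negz 1), (Posz 0)), ((Posz 2), (Posz 0), (Negz 1), (Posz 0)));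
  (((Posz 2), (Posz 0), (Posz 2), (Posz 0)), ((Negz 1), (Posz 0), (Posz 2), (Posz 0)), ((Posz 2), (Posz 0), (Posz 2), (Posz 0)), ((Posz 2), (Posz 0), (Negz 1), (Posz 0)));
  (((Posz 2), (Posz 0), (Posz 2), (Posz 0)), ((Posz 2), (Posz 0), (Negz 1), (Posz 0)), ((Negz 1), (Posz 0), (Negz 1), (Posz 0)), ((Posz 2), (Posz 0), (Negz 1), (Posz 0)));
  (((Posz 1), (Posz 1), (Posz 1), (Negz 0)), ((Posz 1), (Posz 1), (Posz 1), (Negz 0)), ((Posz 1), (Negz 0), (Negz 0), (Negz 0)), ((Negz 0), (Posz 1), (Posz 1), (Posz 1)));
  (((Posz 0), (Posz 0), (Posz 0), (Posz 0)), ((Posz 2), (Posz 0), (Posz 0), (Negz 1)), ((Posz 2), (Posz 0), (Posz 0), (Negz 1)), ((Posz 0), (Posz 0), (Posz 0), (Posz 0)));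
  (((Negz 0), (Posz 1), (Posz 1), (Posz 1)), ((Posz 1), (Negz 0), (Negz 0), (Negz 0)), ((Posz 1), (Posz 1), (Posz 1), (Negz 0)), ((Posz 1), (Posz 1), (Posz 1), (Negz 0)));
  (((Posz 1), (Posz 1), (Posz 1), (Negz 0)), ((Posz 1), (Negz 0), (Negz 0), (Negz 0)), ((Posz 1), (Posz 1), (Posz 1), (Negz 0)), ((Negz 0), (Posz 1), (Posz 1), (Posz 1)));
  (((Posz 0), (Posz 0), (Posz 0), (Posz 0)), ((Posz 0), (Negz 1), (Negz 1), (Posz 0)), ((Posz 0), (Posz 2), (Posz 2), (Posz 0)), ((Posz 0), (Posz 0), (Posz 0), (Posz 0)));
  (((Posz 1), (Posz 1), (Negz 0), (Posz 1)), ((Negz 0), (Negz 0), (Posz 1), (Negz 0)), ((Posz 1), (Negz 0), (Posz 1), (Posz 1)), ((Posz 1), (Negz 0), (Posz 1), (Posz 1)));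
  (((Posz 1), (Posz 1), (Posz 1), (Negz 0)), ((Negz 0), (Negz 0), (Negz 0), (Posz 1)), ((Negz 0), (Posz 1), (Posz 1), (Posz 1)), ((Negz 0), (Posz 1), (Posz 1), (Posz 1)));
  (((Posz 1), (Posz 1), (Negz 0), (Posz 1)), ((Posz 1), (Negz 0), (Posz 1), (Posz 1)), ((Negz 0), (Negz 0), (Posz 1), (Negz 0)), ((Posz 1), (Negz 0), (Posz 1), (Posz 1)));
  (((Posz 0), (Posz 2), (Negz 1), (Posz 0)), ((Posz 0), (Posz 0), (Posz 0), (Posz 0)), ((Posz 0), (Posz 0), (Posz 0), (Posz 0)), ((Posz 0), (Negz 1), (Posz 2), (Posz 0)));
  (((Posz 2), (Posz 0), (Negz 1), (Posz 0)), ((Negz 1), (Posz 0), (Posz 2), (Posz 0)), ((Negz 1), (Posz 0), (Negz 1), (Posz 0)), ((Negz 1), (Posz 0), (Negz 1), (Posz 0)));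
  (((Posz 0), (Posz 0), (Posz 0), (Posz 0)), ((Posz 0), (Posz 0), (Posz 4), (Posz 0)), ((Posz 0), (Posz 0), (Negz 3), (Posz 0)), ((Posz 0), (Posz 0), (Posz 0), (Posz 0)));
  (((Posz 2), (Posz 0), (Posz 2), (Posz 0)), ((Posz 2), (Posz 0), (Posz 2), (Posz 0)), ((Posz 2), (Posz 0), (Negz 1), (Posz 0)), ((Negz 1), (Posz 0), (Posz 2), (Posz 0)));
  (((Posz 1), (Negz 0), (Posz 1), (Posz 1)), ((Posz 1), (Posz 1), (Negz 0), (Posz 1)), ((Negz 0), (Posz 1), (Negz 0), (Negz 0)), ((Posz 1), (Posz 1), (Negz 0), (Posz 1)));
  (((Posz 2), (Posz 0), (Posz 0), (Posz 2)), ((Posz 0), (Posz 0), (Posz 0), (Posz 0)), ((Posz 0), (Posz 0), (Posz 0), (Posz 0)), ((Posz 2), (Posz 0), (Posz 0), (Posz 2)));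
  (((Posz 0), (Posz 0), (Posz 0), (Posz 0)), ((Posz 2), (Posz 0), (Posz 0), (Posz 2)), ((Negz 1), (Posz 0), (Posz 0), (Negz 1)), ((Posz 0), (Posz 0), (Posz 0), (Posz 0)));
  (((Posz 2), (Posz 0), (Negz 1), (Posz 0)), ((Posz 2), (Posz 0), (Posz 2), (Posz 0)), ((Posz 2), (Posz 0), (Negz 1), (Posz 0)), ((Negz 1), (Posz 0), (Negz 1), (Posz 0)));
  (((Negz 1), (Posz 0), (Negz 1), (Posz 0)), ((Posz 2), (Posz 0), (Posz 2), (Posz 0)), ((Posz 2), (Posz 0), (Negz 1), (Posz 0)), ((Posz 2), (Posz 0), (Negz 1), (Posz 0)));
  (((Negz 1), (Posz 0), (Posz 2), (Posz 0)), ((Posz 2), (Posz 0), (Posz 2), (Posz 0)), ((Posz 2), (Posz 0), (Negz 1), (Posz 0)), ((Posz 2), (Posz 0), (Posz 2), (Posz 0)));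
  (((Posz 0), (Posz 0), (Posz 0), (Posz 0)), ((Posz 4), (Posz 0), (Posz 0), (Posz 0)), ((Posz 4), (Posz 0), (Posz 0), (Posz 0)), ((Posz 0), (Posz 0), (Posz 0), (Posz 0)));
  (((Negz 1), (Posz 0), (Posz 2), (Posz 0)), ((Posz 2), (Posz 0), (Negz 1), (Posz 0)), ((Posz 2), (Posz 0), (Posz 2), (Posz 0)), ((Posz 2), (Posz 0), (Posz 2), (Posz 0)));
  (((Negz 0), (Posz 1), (Posz 1), (Posz 1)), ((Posz 1), (Posz 1), (Posz 1), (Negz 0)), ((Negz 0), (Posz 1), (Posz 1), (Posz 1)), ((Negz 0), (Negz 0), (Negz 0), (Posz 1)));
  (((Posz 2), (Posz 0), (Posz 2), (Posz 0)), ((Posz 2), (Posz 0), (Negz 1), (Posz 0)), ((Posz 2), (Posz 0), (Posz 2), (Posz 0)), ((Negz 1), (Posz 0), (Posz 2), (Posz 0)));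
  (((Posz 0), (Posz 0), (Posz 0), (Posz 0)), ((Negz 1), (Posz 0), (Posz 0), (Negz 1)), ((Posz 2), (Posz 0), (Posz 0), (Posz 2)), ((Posz 0), (Posz 0), (Posz 0), (Posz 0)));
  (((Posz 2), (Posz 0), (Posz 2), (Posz 0)), ((Negz 1), (Posz 0), (Negz 1), (Posz 0)), ((Negz 1), (Posz 0), (Posz 2), (Posz 0)), ((Negz 1), (Posz 0), (Posz 2), (Posz 0)));
  (((Posz 2), (Posz 0), (Posz 2), (Posz 0)), ((Negz 1), (Posz 0), (Posz 2), (Posz 0)), ((Negz 1), (Posz 0), (Negz 1), (Posz 0)), ((Negz 1), (Posz 0), (Posz 2), (Posz 0)));
  (((Posz 0), (Posz 0), (Posz 0), (Posz 0)), ((Posz 0), (Posz 2), (Negz 1), (Posz 0)), ((Posz 0), (Posz 2), (Negz 1), (Posz 0)), ((Posz 0), (Posz 0), (Posz 0), (Posz 0)));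
  (((Posz 1), (Negz 0), (Posz 1), (Posz 1)), ((Negz 0), (Posz 1), (Negz 0), (Negz 0)), ((Posz 1), (Posz 1), (Negz 0), (Posz 1)), ((Posz 1), (Posz 1), (Negz 0), (Posz 1)));
  (((Posz 2), (Posz 0), (Negz 1), (Posz 0)), ((Posz 2), (Posz 0), (Negz 1), (Posz 0)), ((Posz 2), (Posz 0), (Posz 2), (Posz 0)), ((Negz 1), (Posz 0), (Negz 1), (Posz 0)));
  (((Negz 1), (Posz 0), (Negz 1), (Posz 0)), ((Posz 2), (Posz 0), (Negz 1), (Posz 0)), ((Posz 2), (Posz 0), (Posz 2), (Posz 0)), ((Posz 2), (Posz 0), (Negz 1), (Posz 0)));
  (((Posz 0), (Posz 0), (Posz 0), (Posz 0)), ((Posz 2), (Posz 0), (Posz 0), (Negz 1)), ((Negz 1), (Posz 0), (Posz 0), (Posz 2)), ((Posz 0), (Posz 0), (Posz 0), (Posz 0)));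
  (((Posz 0), (Posz 0), (Posz 0), (Posz 0)), ((Posz 0), (Posz 0), (Negz 3), (Posz 0)), ((Posz 0), (Posz 0), (Posz 4), (Posz 0)), ((Posz 0), (Posz 0), (Posz 0), (Posz 0)));
  (((Negz 0), (Posz 1), (Posz 1), (Posz 1)), ((Posz 1), (Negz 0), (Negz 0), (Negz 0)), ((Negz 0), (Negz 0), (Negz 0), (Posz 1)), ((Negz 0), (Negz 0), (Negz 0), (Posz 1)));
  (((Posz 1), (Posz 1), (Posz 1), (Negz 0)), ((Posz 1), (Negz 0), (Negz 0), (Negz 0)), ((Negz 0), (Negz 0), (Negz 0), (Posz 1)), ((Posz 1), (Negz 0), (Negz 0), (Negz 0)));
  (((Posz 2), (Posz 0), (Negz 1), (Posz 0)), ((Negz 1), (Posz 0), (Negz 1), (Posz 0)), ((Negz 1), (Posz 0), (Posz 2), (Posz 0)), ((Negz 1), (Posz 0), (Negz 1), (Posz 0)));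
  (((Posz 0), (Posz 0), (Posz 0), (Posz 0)), ((Posz 0), (Negz 1), (Negz 1), (Posz 0)), ((Posz 0), (Negz 1), (Negz 1), (Posz 0)), ((Posz 0), (Posz 0), (Posz 0), (Posz 0)));
  (((Negz 0), (Posz 1), (Posz 1), (Posz 1)), ((Negz 0), (Negz 0), (Negz 0), (Posz 1)), ((Posz 1), (Negz 0), (Negz 0), (Negz 0)), ((Negz 0), (Negz 0), (Negz 0), (Posz 1)));
  (((Posz 1), (Posz 1), (Posz 1), (Negz 0)), ((Negz 0), (Negz 0), (Negz 0), (Posz 1)), ((Posz 1), (Negz 0), (Negz 0), (Negz 0)), ((Posz 1), (Negz 0), (Negz 0), (Negz 0)));
  (((Posz 0), (Posz 0), (Posz 0), (Posz 0)), ((Negz 1), (Posz 0), (Posz 0), (Posz 2)), ((Posz 2), (Posz 0), (Posz 0), (Negz 1)), ((Posz 0), (Posz 0), (Posz 0), (Posz 0)));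
  (((Negz 0), (Posz 1), (Posz 1), (Posz 1)), ((Negz 0), (Posz 1), (Posz 1), (Posz 1)), ((Posz 1), (Posz 1), (Posz 1), (Negz 0)), ((Negz 0), (Negz 0), (Negz 0), (Posz 1)));
  (((Posz 0), (Posz 2), (Negz 1), (Posz 0)), ((Posz 0), (Posz 0), (Posz 0), (Posz 0)), ((Posz 0), (Posz 0), (Posz 0), (Posz 0)), ((Posz 0), (Posz 2), (Negz 1), (Posz 0)));
  (((Negz 0), (Posz 1), (Negz 0), (Negz 0)), ((Negz 0), (Negz 0), (Posz 1), (Negz 0)), ((Negz 0), (Posz 1), (Negz 0), (Negz 0)), ((Posz 1), (Posz 1), (Negz 0), (Posz 1)));
  (((Posz 0), (Posz 0), (Posz 0), (Posz 0)), ((Posz 0), (Negz 1), (Posz 2), (Posz 0)), ((Posz 0), (Posz 2), (Negz 1), (Posz 0)), ((Posz 0), (Posz 0), (Posz 0), (Posz 0)));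
  (((Negz 0), (Posz 1), (Negz 0), (Negz 0)), ((Posz 1), (Negz 0), (Posz 1), (Posz 1)), ((Posz 1), (Posz 1), (Negz 0), (Posz 1)), ((Posz 1), (Posz 1), (Negz 0), (Posz 1)));
  (((Negz 0), (Negz 0), (Posz 1), (Negz 0)), ((Posz 1), (Negz 0), (Posz 1), (Posz 1)), ((Posz 1), (Posz 1), (Negz 0), (Posz 1)), ((Posz 1), (Negz 0), (Posz 1), (Posz 1)));
  (((Posz 0), (Posz 0), (Posz 0), (Posz 0)), ((Posz 0), (Posz 0), (Posz 4), (Posz 0)), ((Posz 0), (Posz 0), (Posz 4), (Posz 0)), ((Posz 0), (Posz 0), (Posz 0), (Posz 0)));
  (((Posz 0), (Posz 0), (Posz 0), (Posz 0)), ((Posz 2), (Posz 0), (Posz 0), (Posz 2)), ((Posz 2), (Posz 0), (Posz 0), (Posz 2)), ((Posz 0), (Posz 0), (Posz 0), (Posz 0)));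
  (((Negz 0), (Negz 0), (Negz 0), (Posz 1)), ((Posz 1), (Posz 1), (Posz 1), (Negz 0)), ((Negz 0), (Posz 1), (Posz 1), (Posz 1)), ((Negz 0), (Posz 1), (Posz 1), (Posz 1)));
  (((Posz 1), (Negz 0), (Posz 1), (Posz 1)), ((Posz 1), (Posz 1), (Negz 0), (Posz 1)), ((Posz 1), (Negz 0), (Posz 1), (Posz 1)), ((Negz 0), (Negz 0), (Posz 1), (Negz 0)));
  (((Posz 2), (Posz 0), (Posz 0), (Posz 2)), ((Posz 0), (Posz 0), (Posz 0), (Posz 0)), ((Posz 0), (Posz 0), (Posz 0), (Posz 0)), ((Negz 1), (Posz 0), (Posz 0), (Negz 1)));
  (((Posz 1), (Negz 0), (Negz 0), (Negz 0)), ((Negz 0), (Posz 1), (Posz 1), (Posz 1)), ((Posz 1), (Posz 1), (Posz 1), (Negz 0)), ((Posz 1), (Posz 1), (Posz 1), (Negz 0)));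
  (((Negz 0), (Negz 0), (Negz 0), (Posz 1)), ((Negz 0), (Posz 1), (Posz 1), (Posz 1)), ((Posz 1), (Posz 1), (Posz 1), (Negz 0)), ((Negz 0), (Posz 1), (Posz 1), (Posz 1)));
  (((Negz 0), (Posz 1), (Negz 0), (Negz 0)), ((Posz 1), (Posz 1), (Negz 0), (Posz 1)), ((Posz 1), (Negz 0), (Posz 1), (Posz 1)), ((Posz 1), (Posz 1), (Negz 0), (Posz 1)));
  (((Negz 1), (Posz 0), (Posz 0), (Negz 1)), ((Posz 0), (Posz 0), (Posz 0), (Posz 0)), ((Posz 0), (Posz 0), (Posz 0), (Posz 0)), ((Posz 2), (Posz 0), (Posz 0), (Posz 2)));
  (((Negz 1), (Posz 0), (Negz 1), (Posz 0)), ((Posz 2), (Posz 0), (Posz 2), (Posz 0)), ((Negz 1), (Posz 0), (Posz 2), (Posz 0)), ((Negz 1), (Posz 0), (Posz 2), (Posz 0)));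
  (((Negz 0), (Negz 0), (Posz 1), (Negz 0)), ((Posz 1), (Posz 1), (Negz 0), (Posz 1)), ((Posz 1), (Negz 0), (Posz 1), (Posz 1)), ((Posz 1), (Negz 0), (Posz 1), (Posz 1)));
  (((Negz 1), (Posz 0), (Posz 2), (Posz 0)), ((Posz 2), (Posz 0), (Posz 2), (Posz 0)), ((Negz 1), (Posz 0), (Posz 2), (Posz 0)), ((Negz 1), (Posz 0), (Negz 1), (Posz 0)));
  (((Posz 0), (Posz 0), (Posz 0), (Posz 0)), ((Posz 4), (Posz 0), (Posz 0), (Posz 0)), ((Negz 3), (Posz 0), (Posz 0), (Posz 0)), ((Posz 0), (Posz 0), (Posz 0), (Posz 0)));
  (((Posz 0), (Posz 0), (Posz 0), (Posz 0)), ((Posz 0), (Posz 2), (Negz 1), (Posz 0)), ((Posz 0), (Negz 1), (Posz 2), (Posz 0)), ((Posz 0), (Posz 0), (Posz 0), (Posz 0)));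
  (((Negz 1), (Posz 0), (Posz 2), (Posz 0)), ((Posz 2), (Posz 0), (Negz 1), (Posz 0)), ((Negz 1), (Posz 0), (Negz 1), (Posz 0)), ((Negz 1), (Posz 0), (Negz 1), (Posz 0)));
  (((Posz 0), (Posz 0), (Posz 4), (Posz 0)), ((Posz 0), (Posz 0), (Posz 0), (Posz 0)), ((Posz 0), (Posz 0), (Posz 0), (Posz 0)), ((Posz 0), (Posz 0), (Negz 3), (Posz 0)));
  (((Posz 0), (Posz 0), (Posz 0), (Posz 0)), ((Negz 1), (Posz 0), (Posz 0), (Negz 1)), ((Negz 1), (Posz 0), (Posz 0), (Negz 1)), ((Posz 0), (Posz 0), (Posz 0), (Posz 0)));
  (((Posz 1), (Negz 0), (Posz 1), (Posz 1)), ((Negz 0), (Negz 0), (Posz 1), (Negz 0)), ((Negz 0), (Posz 1), (Negz 0), (Negz 0)), ((Negz 0), (Negz 0), (Posz 1), (Negz 0)));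
  (((Posz 1), (Negz 0), (Posz 1), (Posz 1)), ((Posz 1), (Negz 0), (Posz 1), (Posz 1)), ((Posz 1), (Posz 1), (Negz 0), (Posz 1)), ((Negz 0), (Negz 0), (Posz 1), (Negz 0)));
  (((Posz 1), (Negz 0), (Negz 0), (Negz 0)), ((Posz 1), (Posz 1), (Posz 1), (Negz 0)), ((Negz 0), (Posz 1), (Posz 1), (Posz 1)), ((Posz 1), (Posz 1), (Posz 1), (Negz 0)));
  (((Posz 1), (Negz 0), (Posz 1), (Posz 1)), ((Negz 0), (Posz 1), (Negz 0), (Negz 0)), ((Negz 0), (Negz 0), (Posz 1), (Negz 0)), ((Negz 0), (Negz 0), (Posz 1), (Negz 0)));
  (((Posz 2), (Posz 0), (Negz 1), (Posz 0)), ((Posz 2), (Posz 0), (Negz 1), (Posz 0)), ((Negz 1), (Posz 0), (Negz 1), (Posz 0)), ((Posz 2), (Posz 0), (Posz 2), (Posz 0)));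
  (((Negz 0), (Posz 1), (Negz 0), (Negz 0)), ((Negz 0), (Posz 1), (Negz 0), (Negz 0)), ((Negz 0), (Negz 0), (Posz 1), (Negz 0)), ((Posz 1), (Posz 1), (Negz 0), (Posz 1)));
  (((Negz 1), (Posz 0), (Negz 1), (Posz 0)), ((Posz 2), (Posz 0), (Negz 1), (Posz 0)), ((Negz 1), (Posz 0), (Negz 1), (Posz 0)), ((Negz 1), (Posz 0), (Posz 2), (Posz 0)));
  (((Posz 0), (Posz 0), (Posz 0), (Posz 0)), ((Posz 0), (Posz 0), (Negz 3), (Posz 0)), ((Posz 0), (Posz 0), (Negz 3), (Posz 0)), ((Posz 0), (Posz 0), (Posz 0), (Posz 0)));
  (((Negz 1), (Posz 0), (Posz 2), (Posz 0)), ((Negz 1), (Posz 0), (Negz 1), (Posz 0)), ((Posz 2), (Posz 0), (Negz 1), (Posz 0)), ((Negz 1), (Posz 0), (Negz 1), (Posz 0)));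
  (((Posz 2), (Posz 0), (Negz 1), (Posz 0)), ((Negz 1), (Posz 0), (Negz 1), (Posz 0)), ((Posz 2), (Posz 0), (Negz 1), (Posz 0)), ((Posz 2), (Posz 0), (Posz 2), (Posz 0)));
  (((Negz 1), (Posz 0), (Negz 1), (Posz 0)), ((Negz 1), (Posz 0), (Negz 1), (Posz 0)), ((Posz 2), (Posz 0), (Negz 1), (Posz 0)), ((Negz 1), (Posz 0), (Posz 2), (Posz 0)));
  (((Posz 0), (Posz 0), (Posz 0), (Posz 0)), ((Negz 3), (Posz 0), (Posz 0), (Posz 0)), ((Posz 4), (Posz 0), (Posz 0), (Posz 0)), ((Posz 0), (Posz 0), (Posz 0), (Posz 0)));
  (((Negz 1), (Posz 0), (Posz 2), (Posz 0)), ((Negz 1), (Posz 0), (Posz 2), (Posz 0)), ((Posz 2), (Posz 0), (Posz 2), (Posz 0)), ((Negz 1), (Posz 0), (Negz 1), (Posz 0)));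
  (((Negz 0), (Posz 1), (Posz 1), (Posz 1)), ((Negz 0), (Negz 0), (Negz 0), (Posz 1)), ((Negz 0), (Posz 1), (Posz 1), (Posz 1)), ((Posz 1), (Posz 1), (Posz 1), (Negz 0)));
  (((Negz 1), (Posz 0), (Negz 1), (Posz 0)), ((Negz 1), (Posz 0), (Posz 2), (Posz 0)), ((Posz 2), (Posz 0), (Posz 2), (Posz 0)), ((Negz 1), (Posz 0), (Posz 2), (Posz 0)));
  (((Posz 0), (Posz 0), (Posz 0), (Posz 0)), ((Negz 1), (Posz 0), (Posz 0), (Posz 2)), ((Negz 1), (Posz 0), (Posz 0), (Posz 2)), ((Posz 0), (Posz 0), (Posz 0), (Posz 0)));
  (((Negz 0), (Posz 1), (Posz 1), (Posz 1)), ((Negz 0), (Posz 1), (Posz 1), (Posz 1)), ((Negz 0), (Negz 0), (Negz 0), (Posz 1)), ((Posz 1), (Posz 1), (Posz 1), (Negz 0)));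
  (((Posz 2), (Posz 0), (Posz 0), (Negz 1)), ((Posz 0), (Posz 0), (Posz 0), (Posz 0)), ((Posz 0), (Posz 0), (Posz 0), (Posz 0)), ((Negz 1), (Posz 0), (Posz 0), (Posz 2)));
  (((Posz 1), (Negz 0), (Negz 0), (Negz 0)), ((Posz 1), (Negz 0), (Negz 0), (Negz 0)), ((Posz 1), (Posz 1), (Posz 1), (Negz 0)), ((Negz 0), (Negz 0), (Negz 0), (Posz 1)));
  (((Negz 0), (Posz 1), (Negz 0), (Negz 0)), ((Negz 0), (Negz 0), (Posz 1), (Negz 0)), ((Posz 1), (Negz 0), (Posz 1), (Posz 1)), ((Negz 0), (Negz 0), (Posz 1), (Negz 0)));
  (((Posz 1), (Negz 0), (Negz 0), (Negz 0)), ((Negz 0), (Negz 0), (Negz 0), (Posz 1)), ((Negz 0), (Posz 1), (Posz 1), (Posz 1)), ((Negz 0), (Negz 0), (Negz 0), (Posz 1)));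
  (((Posz 0), (Posz 0), (Posz 0), (Posz 0)), ((Posz 0), (Negz 1), (Posz 2), (Posz 0)), ((Posz 0), (Negz 1), (Posz 2), (Posz 0)), ((Posz 0), (Posz 0), (Posz 0), (Posz 0)));
  (((Negz 0), (Posz 1), (Negz 0), (Negz 0)), ((Posz 1), (Negz 0), (Posz 1), (Posz 1)), ((Negz 0), (Negz 0), (Posz 1), (Negz 0)), ((Negz 0), (Negz 0), (Posz 1), (Negz 0)));
  (((Posz 1), (Negz 0), (Negz 0), (Negz 0)), ((Negz 0), (Posz 1), (Posz 1), (Posz 1)), ((Negz 0), (Negz 0), (Negz 0), (Posz 1)), ((Negz 0), (Negz 0), (Negz 0), (Posz 1)));
  (((Negz 0), (Negz 0), (Posz 1), (Negz 0)), ((Posz 1), (Negz 0), (Posz 1), (Posz 1)), ((Negz 0), (Negz 0), (Posz 1), (Negz 0)), ((Negz 0), (Posz 1), (Negz 0), (Negz 0)));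
  (((Posz 1), (Negz 0), (Posz 1), (Posz 1)), ((Posz 1), (Negz 0), (Posz 1), (Posz 1)), ((Negz 0), (Negz 0), (Posz 1), (Negz 0)), ((Posz 1), (Posz 1), (Negz 0), (Posz 1)));
  (((Negz 0), (Negz 0), (Negz 0), (Posz 1)), ((Posz 1), (Posz 1), (Posz 1), (Negz 0)), ((Posz 1), (Negz 0), (Negz 0), (Negz 0)), ((Posz 1), (Negz 0), (Negz 0), (Negz 0)));
  (((Negz 1), (Posz 0), (Posz 0), (Posz 2)), ((Posz 0), (Posz 0), (Posz 0), (Posz 0)), ((Posz 0), (Posz 0), (Posz 0), (Posz 0)), ((Posz 2), (Posz 0), (Posz 0), (Negz 1)));
  (((Posz 0), (Posz 0), (Negz 3), (Posz 0)), ((Posz 0), (Posz 0), (Posz 0), (Posz 0)), ((Posz 0), (Posz 0), (Posz 0), (Posz 0)), ((Posz 0), (Posz 0), (Posz 4), (Posz 0)));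
  (((Negz 0), (Negz 0), (Negz 0), (Posz 1)), ((Negz 0), (Posz 1), (Posz 1), (Posz 1)), ((Negz 0), (Negz 0), (Negz 0), (Posz 1)), ((Posz 1), (Negz 0), (Negz 0), (Negz 0)));
  (((Negz 0), (Posz 1), (Negz 0), (Negz 0)), ((Posz 1), (Posz 1), (Negz 0), (Posz 1)), ((Negz 0), (Posz 1), (Negz 0), (Negz 0)), ((Negz 0), (Negz 0), (Posz 1), (Negz 0)));
  (((Posz 1), (Negz 0), (Negz 0), (Negz 0)), ((Posz 1), (Posz 1), (Posz 1), (Negz 0)), ((Posz 1), (Negz 0), (Negz 0), (Negz 0)), ((Negz 0), (Negz 0), (Negz 0), (Posz 1)));
  (((Negz 1), (Posz 0), (Posz 0), (Negz 1)), ((Posz 0), (Posz 0), (Posz 0), (Posz 0)), ((Posz 0), (Posz 0), (Posz 0), (Posz 0)), ((Negz 1), (Posz 0), (Posz 0), (Negz 1)));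
  (((Negz 0), (Negz 0), (Posz 1), (Negz 0)), ((Posz 1), (Posz 1), (Negz 0), (Posz 1)), ((Negz 0), (Posz 1), (Negz 0), (Negz 0)), ((Negz 0), (Posz 1), (Negz 0), (Negz 0)));
  (((Posz 0), (Negz 1), (Posz 2), (Posz 0)), ((Posz 0), (Posz 0), (Posz 0), (Posz 0)), ((Posz 0), (Posz 0), (Posz 0), (Posz 0)), ((Posz 0), (Posz 2), (Negz 1), (Posz 0)));
  (((Negz 0), (Negz 0), (Posz 1), (Negz 0)), ((Negz 0), (Posz 1), (Negz 0), (Negz 0)), ((Posz 1), (Posz 1), (Negz 0), (Posz 1)), ((Negz 0), (Posz 1), (Negz 0), (Negz 0)));
  (((Posz 1), (Negz 0), (Posz 1), (Posz 1)), ((Negz 0), (Negz 0), (Posz 1), (Negz 0)), ((Posz 1), (Negz 0), (Posz 1), (Posz 1)), ((Posz 1), (Posz 1), (Negz 0), (Posz 1)));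
  (((Posz 0), (Posz 0), (Posz 4), (Posz 0)), ((Posz 0), (Posz 0), (Posz 0), (Posz 0)), ((Posz 0), (Posz 0), (Posz 0), (Posz 0)), ((Posz 0), (Posz 0), (Posz 4), (Posz 0)));
  (((Negz 0), (Negz 0), (Negz 0), (Posz 1)), ((Posz 1), (Negz 0), (Negz 0), (Negz 0)), ((Posz 1), (Posz 1), (Posz 1), (Negz 0)), ((Posz 1), (Negz 0), (Negz 0), (Negz 0)));
  (((Negz 0), (Negz 0), (Negz 0), (Posz 1)), ((Negz 0), (Negz 0), (Negz 0), (Posz 1)), ((Negz 0), (Posz 1), (Posz 1), (Posz 1)), ((Posz 1), (Negz 0), (Negz 0), (Negz 0)));
  (((Negz 0), (Posz 1), (Negz 0), (Negz 0)), ((Negz 0), (Posz 1), (Negz 0), (Negz 0)), ((Posz 1), (Posz 1), (Negz 0), (Posz 1)), ((Negz 0), (Negz 0), (Posz 1), (Negz 0)));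
  (((Negz 0), (Negz 0), (Posz 1), (Negz 0)), ((Negz 0), (Negz 0), (Posz 1), (Negz 0)), ((Posz 1), (Negz 0), (Posz 1), (Posz 1)), ((Negz 0), (Posz 1), (Negz 0), (Negz 0)));
  (((Negz 1), (Posz 0), (Posz 2), (Posz 0)), ((Negz 1), (Posz 0), (Negz 1), (Posz 0)), ((Negz 1), (Posz 0), (Posz 2), (Posz 0)), ((Posz 2), (Posz 0), (Posz 2), (Posz 0)));
  (((Negz 1), (Posz 0), (Negz 1), (Posz 0)), ((Negz 1), (Posz 0), (Negz 1), (Posz 0)), ((Negz 1), (Posz 0), (Posz 2), (Posz 0)), ((Posz 2), (Posz 0), (Negz 1), (Posz 0)));
  (((Posz 0), (Posz 0), (Posz 0), (Posz 0)), ((Negz 3), (Posz 0), (Posz 0), (Posz 0)), ((Negz 3), (Posz 0), (Posz 0), (Posz 0)), ((Posz 0), (Posz 0), (Posz 0), (Posz 0)));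
  (((Negz 1), (Posz 0), (Posz 2), (Posz 0)), ((Negz 1), (Posz 0), (Posz 2), (Posz 0)), ((Negz 1), (Posz 0), (Negz 1), (Posz 0)), ((Posz 2), (Posz 0), (Posz 2), (Posz 0)));
  (((Negz 1), (Posz 0), (Negz 1), (Posz 0)), ((Negz 1), (Posz 0), (Posz 2), (Posz 0)), ((Negz 1), (Posz 0), (Negz 1), (Posz 0)), ((Posz 2), (Posz 0), (Negz 1), (Posz 0)));
  (((Posz 2), (Posz 0), (Posz 0), (Negz 1)), ((Posz 0), (Posz 0), (Posz 0), (Posz 0)), ((Posz 0), (Posz 0), (Posz 0), (Posz 0)), ((Posz 2), (Posz 0), (Posz 0), (Negz 1)));
  (((Posz 0), (Posz 0), (Negz 3), (Posz 0)), ((Posz 0), (Posz 0), (Posz 0), (Posz 0)), ((Posz 0), (Posz 0), (Posz 0), (Posz 0)), ((Posz 0), (Posz 0), (Negz 3), (Posz 0)));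
  (((Posz 1), (Negz 0), (Negz 0), (Negz 0)), ((Posz 1), (Negz 0), (Negz 0), (Negz 0)), ((Negz 0), (Negz 0), (Negz 0), (Posz 1)), ((Posz 1), (Posz 1), (Posz 1), (Negz 0)));
  (((Posz 1), (Negz 0), (Negz 0), (Negz 0)), ((Negz 0), (Negz 0), (Negz 0), (Posz 1)), ((Posz 1), (Negz 0), (Negz 0), (Negz 0)), ((Posz 1), (Posz 1), (Posz 1), (Negz 0)));
  (((Negz 0), (Negz 0), (Negz 0), (Posz 1)), ((Negz 0), (Negz 0), (Negz 0), (Posz 1)), ((Posz 1), (Negz 0), (Negz 0), (Negz 0)), ((Negz 0), (Posz 1), (Posz 1), (Posz 1)));
  (((Posz 0), (Negz 1), (Negz 1), (Posz 0)), ((Posz 0), (Posz 0), (Posz 0), (Posz 0)), ((Posz 0), (Posz 0), (Posz 0), (Posz 0)), ((Posz 0), (Posz 2), (Posz 2), (Posz 0)));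
  (((Negz 1), (Posz 0), (Posz 0), (Posz 2)), ((Posz 0), (Posz 0), (Posz 0), (Posz 0)), ((Posz 0), (Posz 0), (Posz 0), (Posz 0)), ((Negz 1), (Posz 0), (Posz 0), (Posz 2)));
  (((Negz 3), (Posz 0), (Posz 0), (Posz 0)), ((Posz 0), (Posz 0), (Posz 0), (Posz 0)), ((Posz 0), (Posz 0), (Posz 0), (Posz 0)), ((Posz 4), (Posz 0), (Posz 0), (Posz 0)));
  (((Negz 0), (Negz 0), (Negz 0), (Posz 1)), ((Posz 1), (Negz 0), (Negz 0), (Negz 0)), ((Negz 0), (Negz 0), (Negz 0), (Posz 1)), ((Negz 0), (Posz 1), (Posz 1), (Posz 1)));
  (((Posz 0), (Negz 1), (Posz 2), (Posz 0)), ((Posz 0), (Posz 0), (Posz 0), (Posz 0)), ((Posz 0), (Posz 0), (Posz 0), (Posz 0)), ((Posz 0), (Negz 1), (Posz 2), (Posz 0)));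
  (((Negz 0), (Negz 0), (Posz 1), (Negz 0)), ((Negz 0), (Posz 1), (Negz 0), (Negz 0)), ((Negz 0), (Negz 0), (Posz 1), (Negz 0)), ((Posz 1), (Negz 0), (Posz 1), (Posz 1)));
  (((Negz 0), (Negz 0), (Posz 1), (Negz 0)), ((Negz 0), (Negz 0), (Posz 1), (Negz 0)), ((Negz 0), (Posz 1), (Negz 0), (Negz 0)), ((Posz 1), (Negz 0), (Posz 1), (Posz 1)));
  (((Negz 3), (Posz 0), (Posz 0), (Posz 0)), ((Posz 0), (Posz 0), (Posz 0), (Posz 0)), ((Posz 0), (Posz 0), (Posz 0), (Posz 0)), ((Negz 3), (Posz 0), (Posz 0), (Posz 0)));
  (((Posz 0), (Negz 1), (Negz 1), (Posz 0)), ((Posz 0), (Posz 0), (Posz 0), (Posz 0)), ((Posz 0), (Posz 0), (Posz 0), (Posz 0)), ((Posz 0), (Negz 1), (Negz 1), (Posz 0)))].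
Definition gtab : seq (seq nat) := [:: [:: 1; 4; 7; 10; 0; 14; 17; 19; 21; 23; 25; 18; 29; 32; 34; 36; 38; 40; 33; 2; 35; 47; 37; 49; 43; 3; 45; 57; 46; 59; 58; 62; 64; 11; 5; 60; 71; 61; 73; 67; 6; 69; 81; 70; 53; 83; 63; 8; 42; 9; 79; 80; 86; 91; 90; 82; 93; 94; 92; 12; 20; 22; 100; 28; 13; 98; 108; 99; 77; 110; 24; 15; 66; 16; 106; 107; 112; 117; 116; 109; 118; 48; 101; 26; 96; 78; 121; 113; 114; 115; 123; 44; 30; 102; 27; 119; 120; 104; 128; 39; 31; 55; 56; 127; 134; 133; 129; 135; 72; 50; 41; 105; 137; 130; 131; 132; 85; 68; 51; 136; 84; 52; 125; 54; 138; 139; 140; 141; 65; 74; 87; 88; 89; 111; 97; 75; 95; 76; 142; 122; 143; 103; 124; 126];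
  [:: 2; 5; 8; 11; 12; 15; 18; 20; 0; 24; 26; 28; 30; 33; 35; 1; 39; 41; 43; 44; 27; 48; 40; 50; 52; 49; 55; 7; 3; 60; 4; 63; 65; 67; 68; 42; 72; 64; 74; 76; 73; 79; 14; 6; 54; 70; 84; 85; 51; 61; 88; 21; 9; 81; 19; 10; 91; 95; 94; 97; 66; 25; 101; 103; 100; 106; 29; 13; 78; 99; 96; 111; 75; 22; 114; 36; 16; 108; 34; 17; 117; 119; 121; 122; 98; 87; 110; 47; 23; 116; 118; 124; 123; 115; 102; 104; 45; 105; 46; 120; 37; 131; 58; 31; 57; 59; 32; 134; 136; 137; 125; 113; 128; 71; 38; 133; 135; 138; 132; 53; 69; 126; 127; 130; 56; 86; 82; 83; 139; 141; 92; 62; 90; 93; 142; 89; 77; 140; 80; 112; 109; 143; 107; 129];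
  [:: 3; 6; 9; 0; 13; 16; 1; 18; 22; 2; 27; 29; 31; 4; 33; 37; 5; 42; 7; 45; 46; 43; 8; 51; 53; 54; 56; 10; 58; 11; 61; 12; 66; 14; 69; 70; 67; 15; 75; 77; 78; 80; 17; 21; 82; 19; 20; 79; 86; 87; 89; 23; 90; 24; 25; 92; 26; 96; 28; 98; 99; 30; 102; 104; 105; 107; 32; 36; 109; 34; 35; 106; 112; 113; 115; 38; 116; 39; 40; 47; 41; 120; 44; 119; 108; 114; 48; 49; 123; 50; 52; 125; 55; 126; 127; 128; 57; 129; 59; 60; 130; 132; 62; 133; 63; 64; 71; 65; 84; 68; 136; 131; 72; 73; 85; 74; 76; 139; 140; 83; 81; 138; 134; 88; 141; 91; 93; 94; 95; 97; 100; 111; 101; 103; 122; 143; 110; 142; 121; 117; 118; 124; 137; 135]].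
Definition wordtab : seq (seq nat) := [:: [:: ];
  [:: 0];
  [:: 1];
  [:: 2];
  [:: 0; 0];
  [:: 1; 0];
  [:: 2; 0];
  [:: 0; 1];
  [:: 1; 1];
  [:: 2; 1];
  [:: 0; 2];
  [:: 1; 2];
  [:: 1; 0; 0];
  [:: 2; 0; 0];
  [:: 0; 1; 0];
  [:: 1; 1; 0];
  [:: 2; 1; 0];
  [:: 0; 2; 0];
  [:: 1; 2; 0];
  [:: 0; 0; 1];
  [:: 1; 0; 1];
  [:: 0; 1; 1];
  [:: 2; 1; 1];
  [:: 0; 2; 1];
  [:: 1; 2; 1];
  [:: 0; 0; 2];
  [:: 1; 0; 2];
  [:: 2; 0; 2];
  [:: 1; 1; 2];
  [:: 2; 1; 2];
  [:: 1; 1; 0; 0];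
  [:: 2; 1; 0; 0];
  [:: 0; 2; 0; 0];
  [:: 1; 2; 0; 0];
  [:: 0; 0; 1; 0];
  [:: 1; 0; 1; 0];
  [:: 0; 1; 1; 0];
  [:: 2; 1; 1; 0];
  [:: 0; 2; 1; 0];
  [:: 1; 2; 1; 0];
  [:: 0; 0; 2; 0];
  [:: 1; 0; 2; 0];
  [:: 2; 0; 2; 0];
  [:: 1; 1; 2; 0];
  [:: 1; 0; 0; 1];
  [:: 2; 0; 0; 1];
  [:: 2; 1; 0; 1];
  [:: 0; 0; 1; 1];
  [:: 1; 0; 1; 1];
  [:: 0; 0; 2; 1];
  [:: 1; 0; 2; 1];
  [:: 2; 0; 2; 1];
  [:: 1; 1; 2; 1];
  [:: 2; 1; 2; 1];
  [:: 2; 0; 0; 2];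
  [:: 1; 1; 0; 2];
  [:: 2; 1; 0; 2];
  [:: 0; 2; 0; 2];
  [:: 2; 1; 1; 2];
  [:: 0; 2; 1; 2];
  [:: 1; 2; 1; 2];
  [:: 2; 1; 1; 0; 0];
  [:: 0; 2; 1; 0; 0];
  [:: 1; 2; 1; 0; 0];
  [:: 0; 0; 2; 0; 0];
  [:: 1; 0; 2; 0; 0];
  [:: 2; 0; 2; 0; 0];
  [:: 1; 1; 2; 0; 0];
  [:: 1; 0; 0; 1; 0];
  [:: 2; 0; 0; 1; 0];
  [:: 2; 1; 0; 1; 0];
  [:: 0; 0; 1; 1; 0];
  [:: 1; 0; 1; 1; 0];
  [:: 0; 0; 2; 1; 0];
  [:: 1; 0; 2; 1; 0];
  [:: 2; 0; 2; 1; 0];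
  [:: 1; 1; 2; 1; 0];
  [:: 2; 1; 2; 1; 0];
  [:: 2; 0; 0; 2; 0];
  [:: 1; 1; 0; 2; 0];
  [:: 2; 1; 0; 2; 0];
  [:: 0; 2; 0; 2; 0];
  [:: 2; 1; 0; 0; 1];
  [:: 0; 2; 0; 0; 1];
  [:: 1; 2; 1; 0; 1];
  [:: 1; 0; 0; 1; 1];
  [:: 2; 1; 0; 1; 1];
  [:: 2; 0; 0; 2; 1];
  [:: 1; 1; 0; 2; 1];
  [:: 2; 1; 0; 2; 1];
  [:: 2; 1; 1; 2; 1];
  [:: 0; 2; 1; 2; 1];
  [:: 2; 1; 1; 0; 2];
  [:: 0; 2; 1; 0; 2];
  [:: 0; 0; 2; 0; 2];
  [:: 1; 0; 2; 0; 2];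
  [:: 2; 0; 2; 0; 2];
  [:: 1; 0; 2; 1; 2];
  [:: 2; 0; 2; 1; 2];
  [:: 2; 1; 2; 1; 2];
  [:: 0; 0; 2; 1; 0; 0];
  [:: 1; 0; 2; 1; 0; 0];
  [:: 2; 0; 2; 1; 0; 0];
  [:: 1; 1; 2; 1; 0; 0];
  [:: 2; 1; 2; 1; 0; 0];
  [:: 2; 0; 0; 2; 0; 0];
  [:: 1; 1; 0; 2; 0; 0];
  [:: 2; 1; 0; 2; 0; 0];
  [:: 0; 2; 0; 2; 0; 0];
  [:: 2; 1; 0; 0; 1; 0];
  [:: 0; 2; 0; 0; 1; 0];
  [:: 1; 0; 0; 1; 1; 0];
  [:: 2; 1; 0; 1; 1; 0];
  [:: 2; 0; 0; 2; 1; 0];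
  [:: 1; 1; 0; 2; 1; 0];
  [:: 2; 1; 0; 2; 1; 0];
  [:: 2; 1; 1; 2; 1; 0];
  [:: 0; 2; 1; 2; 1; 0];
  [:: 0; 2; 1; 0; 2; 0];
  [:: 1; 0; 2; 0; 2; 0];
  [:: 2; 0; 2; 0; 2; 0];
  [:: 1; 2; 1; 0; 0; 1];
  [:: 1; 0; 2; 0; 0; 1];
  [:: 2; 1; 1; 0; 2; 1];
  [:: 1; 0; 2; 1; 2; 1];
  [:: 2; 0; 2; 1; 2; 1];
  [:: 2; 0; 2; 1; 0; 2];
  [:: 2; 0; 0; 2; 0; 2];
  [:: 2; 1; 0; 2; 0; 2];
  [:: 2; 1; 0; 2; 1; 2];
  [:: 2; 0; 0; 2; 1; 0; 0];
  [:: 1; 1; 0; 2; 1; 0; 0];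
  [:: 2; 1; 0; 2; 1; 0; 0];
  [:: 2; 1; 1; 2; 1; 0; 0];
  [:: 0; 2; 1; 2; 1; 0; 0];
  [:: 0; 2; 1; 0; 2; 0; 0];
  [:: 1; 0; 2; 0; 2; 0; 0];
  [:: 1; 2; 1; 0; 0; 1; 0];
  [:: 1; 0; 2; 1; 2; 1; 0];
  [:: 2; 0; 2; 1; 2; 1; 0];
  [:: 2; 0; 2; 1; 0; 2; 0];
  [:: 2; 1; 0; 2; 1; 2; 1];
  [:: 1; 0; 2; 1; 2; 1; 0; 0];
  [:: 2; 0; 2; 1; 0; 2; 0; 0]].
Definition invtab : seq nat := [:: 0; 4; 8; 3; 1; 47; 25; 30; 2; 28; 13; 22; 21; 10; 92; 19; 63; 64; 61; 15; 87; 12; 11; 67; 73; 6; 79; 54; 9; 58; 7; 46; 32; 37; 71; 130; 59; 33; 39; 38; 40; 50; 123; 49; 51; 55; 31; 5; 85; 43; 41; 44; 52; 102; 27; 45; 104; 105; 29; 36; 113; 18; 99; 16; 17; 109; 90; 23; 118; 101; 100; 34; 116; 24; 110; 91; 121; 93; 94; 26; 97; 111; 98; 106; 114; 48; 103; 20; 96; 95; 66; 75; 14; 77; 78; 89; 88; 80; 82; 62; 70; 69; 53; 86; 56; 57; 83; 134; 133; 65; 74; 81; 141; 60; 84; 136; 72; 135; 68; 132; 131; 76; 140; 42; 138; 126; 125; 127; 129; 128; 35; 120; 119; 108; 107; 117; 115; 137; 124; 143; 122; 112; 142; 139].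
Definition G5l : seq nat := [:: 0; 1; 2; 4; 5; 7; 8; 12; 14; 15; 19; 20; 21; 27; 29; 30; 34; 35; 36; 42; 44; 47; 48; 51; 53; 54; 56; 57; 58; 59; 60; 66; 68; 71; 72; 75; 77; 78; 80; 81; 85; 87; 89; 90; 91; 92; 93; 94; 95; 97; 102; 104; 105; 107; 108; 111; 113; 115; 116; 117; 118; 119; 123; 124; 130; 132; 133; 134; 135; 136; 138; 142].
Definition rid : seq nat := [:: 1; 2; 4; 8; 27; 29; 34; 48; 54; 58; 71; 85; 108; 119; 132; 133].
Definition clsl : seq nat := [:: 0; 2; 1; 3; 0; 2; 2; 0; 1; 3; 3; 1; 0; 2; 3; 1].
Definition ctab : seq (seq nat) := [:: [:: 0; 6; 2; 10; 7; 1; 5; 12; 11; 3; 9; 15; 4; 13; 14; 8];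
  [:: 4; 1; 8; 3; 7; 13; 5; 0; 11; 14; 9; 2; 12; 6; 10; 15];
  [:: 0; 5; 2; 9; 12; 6; 1; 4; 15; 10; 3; 8; 7; 13; 14; 11];
  [:: 7; 1; 11; 3; 0; 6; 13; 4; 2; 10; 14; 8; 12; 5; 9; 15];
  [:: 12; 5; 15; 9; 4; 13; 6; 0; 8; 14; 10; 2; 7; 1; 3; 11];
  [:: 12; 6; 15; 10; 0; 5; 13; 7; 2; 9; 14; 11; 4; 1; 3; 8];
  [:: 7; 13; 11; 14; 4; 1; 6; 12; 8; 3; 10; 15; 0; 5; 9; 2];
  [:: 4; 13; 8; 14; 12; 5; 1; 7; 15; 9; 3; 11; 0; 6; 10; 2];
  [:: 7; 13; 11; 14; 4; 1; 6; 12; 8; 3; 10; 15; 0; 5; 9; 2];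
  [:: 4; 13; 8; 14; 12; 5; 1; 7; 15; 9; 3; 11; 0; 6; 10; 2];
  [:: 12; 5; 15; 9; 4; 13; 6; 0; 8; 14; 10; 2; 7; 1; 3; 11];
  [:: 12; 6; 15; 10; 0; 5; 13; 7; 2; 9; 14; 11; 4; 1; 3; 8];
  [:: 7; 1; 11; 3; 0; 6; 13; 4; 2; 10; 14; 8; 12; 5; 9; 15];
  [:: 0; 5; 2; 9; 12; 6; 1; 4; 15; 10; 3; 8; 7; 13; 14; 11];
  [:: 0; 6; 2; 10; 7; 1; 5; 12; 11; 3; 9; 15; 4; 13; 14; 8];
  [:: 4; 1; 8; 3; 7; 13; 5; 0; 11; 14; 9; 2; 12; 6; 10; 15]].
Definition rinvl : seq nat := [:: 2; 3; 0; 1; 8; 9; 10; 11; 4; 5; 6; 7; 15; 14; 13; 12].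
Definition H0l : seq nat := [:: 0; 1; 4; 27; 42; 48; 54; 57; 66; 72; 78; 81; 85; 90; 94; 105; 108; 111; 116; 123; 124; 133; 138; 142].
Definition H1l : seq nat := [:: 0; 2; 8; 29; 34; 53; 58; 60; 66; 68; 71; 78; 81; 90; 94; 102; 107; 111; 113; 118; 119; 132; 134; 142].
Definition pgtab : seq (seq bool) := [:: [:: false; true; false; true; false; true; true; false; false; true; true; false; false; false; false; false];
  [:: true; false; true; false; true; false; false; true; true; false; false; true; false; false; false; false];
  [:: false; true; false; true; false; true; true; false; false; true; true; false; false; false; false; false];
  [:: true; false; true; false; true; false; false; true; true; false; false; true; false; false; false; false];
  [:: false; true; false; true; false; true; false; false; false; true; false; false; false; true; true; false];
  [:: true; false; true; false; true; false; false; false; true; false; false; false; true; false; false; true];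
  [:: true; false; true; false; false; false; false; true; false; false; false; true; true; false; false; true];
  [:: false; true; false; true; false; false; true; false; false; false; true; false; false; true; true; false];
  [:: false; true; false; true; false; true; false; false; false; true; false; false; false; true; true; false];
  [:: true; false; true; false; true; false; false; false; true; false; false; false; true; false; false; true];
  [:: true; false; true; false; false; false; false; true; false; false; false; true; true; false; false; true];
  [:: false; true; false; true; false; false; true; false; false; false; true; false; false; true; true; false];
  [:: false; false; false; false; false; true; true; false; false; true; true; false; false; true; true; false];
  [:: false; false; false; false; true; false; false; true; true; false; false; true; true; false; false; true];
  [:: false; false; false; false; true; false; false; true; true; false; false; true; true; false; false; true];
  [:: false; false; false; false; false; true; true; false; false; true; true; false; false; true; true; false]].
Definition pgwtab : seq (seq (seq (seq nat))) := [:: [:: [::]; [:: [:: 0]; [:: 1]; [:: 2]; [:: 3]]; [::]; [:: [:: 0]; [:: 3]; [:: 2]; [:: 1]]; [::]; [:: [:: 0]; [:: 2; 1; 0]; [:: 2]; [:: 2; 3; 0]]; [:: [:: 0]; [:: 0; 1; 2]; [:: 2]; [:: 0; 3; 2]]; [::]; [::]; [:: [:: 0]; [:: 2; 3; 0]; [:: 2]; [:: 2; 1; 0]]; [:: [:: 0]; [:: 0; 3; 2]; [:: 2]; [:: 0; 1; 2]]; [::]; [::]; [::]; [::]; [::]];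
  [:: [:: [:: 1]; [:: 0]; [:: 3]; [:: 2]]; [::]; [:: [:: 3]; [:: 0]; [:: 1]; [:: 2]]; [::]; [:: [:: 0; 1; 2]; [:: 0]; [:: 0; 3; 2]; [:: 2]]; [::]; [::]; [:: [:: 2; 1; 0]; [:: 0]; [:: 2; 3; 0]; [:: 2]]; [:: [:: 0; 3; 2]; [:: 0]; [:: 0; 1; 2]; [:: 2]]; [::]; [::]; [:: [:: 2; 3; 0]; [:: 0]; [:: 2; 1; 0]; [:: 2]]; [::]; [::]; [::]; [::]];
  [:: [::]; [:: [:: 2]; [:: 1]; [:: 0]; [:: 3]]; [::]; [:: [:: 2]; [:: 3]; [:: 0]; [:: 1]]; [::]; [:: [:: 2]; [:: 0; 1; 2]; [:: 0]; [:: 0; 3; 2]]; [:: [:: 2]; [:: 2; 1; 0]; [:: 0]; [:: 2; 3; 0]]; [::]; [::]; [:: [:: 2]; [:: 0; 3; 2]; [:: 0]; [:: 0; 1; 2]]; [:: [:: 2]; [:: 2; 3; 0]; [:: 0]; [:: 2; 1; 0]]; [::]; [::]; [::]; [::]; [::]];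
  [:: [:: [:: 1]; [:: 2]; [:: 3]; [:: 0]]; [::]; [:: [:: 3]; [:: 2]; [:: 1]; [:: 0]]; [::]; [:: [:: 2; 1; 0]; [:: 2]; [:: 2; 3; 0]; [:: 0]]; [::]; [::]; [:: [:: 0; 1; 2]; [:: 2]; [:: 0; 3; 2]; [:: 0]]; [:: [:: 2; 3; 0]; [:: 2]; [:: 2; 1; 0]; [:: 0]]; [::]; [::]; [:: [:: 0; 3; 2]; [:: 2]; [:: 0; 1; 2]; [:: 0]]; [::]; [::]; [::]; [::]];
  [:: [::]; [:: [:: 1; 0; 3]; [:: 1]; [:: 1; 2; 3]; [:: 3]]; [::]; [:: [:: 3; 0; 1]; [:: 3]; [:: 3; 2; 1]; [:: 1]]; [::]; [:: [:: 3; 0; 1]; [:: 0; 1; 2]; [:: 3; 2; 1]; [:: 0; 3; 2]]; [::]; [::]; [::]; [:: [:: 1; 0; 3]; [:: 0; 3; 2]; [:: 1; 2; 3]; [:: 0; 1; 2]]; [::]; [::]; [::]; [:: [:: 2; 1; 0; 3; 0]; [:: 2; 1; 0]; [:: 2; 1; 2; 3; 0]; [:: 2; 3; 0]]; [:: [:: 2; 3; 0; 1; 0]; [:: 2; 3; 0]; [:: 2; 3; 2; 1; 0]; [:: 2; 1; 0]]; [::]];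
  [:: [:: [:: 1]; [:: 3; 0; 1]; [:: 3]; [:: 3; 2; 1]]; [::]; [:: [:: 3]; [:: 1; 0; 3]; [:: 1]; [:: 1; 2; 3]]; [::]; [:: [:: 2; 1; 0]; [:: 1; 0; 3]; [:: 2; 3; 0]; [:: 1; 2; 3]]; [::]; [::]; [::]; [:: [:: 2; 3; 0]; [:: 3; 0; 1]; [:: 2; 1; 0]; [:: 3; 2; 1]]; [::]; [::]; [::]; [:: [:: 0; 1; 2]; [:: 2; 1; 0; 3; 0]; [:: 0; 3; 2]; [:: 2; 1; 2; 3; 0]]; [::]; [::]; [:: [:: 0; 3; 2]; [:: 2; 3; 0; 1; 0]; [:: 0; 1; 2]; [:: 2; 3; 2; 1; 0]]];
  [:: [:: [:: 1]; [:: 1; 0; 3]; [:: 3]; [:: 1; 2; 3]]; [::]; [:: [:: 3]; [:: 3; 0; 1]; [:: 1]; [:: 3; 2; 1]]; [::]; [::]; [::]; [::]; [:: [:: 0; 1; 2]; [:: 3; 0; 1]; [:: 0; 3; 2]; [:: 3; 2; 1]]; [::]; [::]; [::]; [:: [:: 0; 3; 2]; [:: 1; 0; 3]; [:: 0; 1; 2]; [:: 1; 2; 3]]; [:: [:: 2; 1; 0]; [:: 2; 1; 0; 3; 0]; [:: 2; 3; 0]; [:: 2; 1; 2; 3; 0]]; [::]; [::]; [:: [:: 2; 3; 0]; [:: 2; 3; 0; 1; 0]; [:: 2; 1; 0]; [:: 2; 3; 2; 1; 0]]];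
  [:: [::]; [:: [:: 3; 0; 1]; [:: 1]; [:: 3; 2; 1]; [:: 3]]; [::]; [:: [:: 1; 0; 3]; [:: 3]; [:: 1; 2; 3]; [:: 1]]; [::]; [::]; [:: [:: 1; 0; 3]; [:: 2; 1; 0]; [:: 1; 2; 3]; [:: 2; 3; 0]]; [::]; [::]; [::]; [:: [:: 3; 0; 1]; [:: 2; 3; 0]; [:: 3; 2; 1]; [:: 2; 1; 0]]; [::]; [::]; [:: [:: 2; 1; 0; 3; 0]; [:: 0; 1; 2]; [:: 2; 1; 2; 3; 0]; [:: 0; 3; 2]]; [:: [:: 2; 3; 0; 1; 0]; [:: 0; 3; 2]; [:: 2; 3; 2; 1; 0]; [:: 0; 1; 2]]; [::]];
  [:: [::]; [:: [:: 1; 2; 3]; [:: 1]; [:: 1; 0; 3]; [:: 3]]; [::]; [:: [:: 3; 2; 1]; [:: 3]; [:: 3; 0; 1]; [:: 1]]; [::]; [:: [:: 3; 2; 1]; [:: 2; 1; 0]; [:: 3; 0; 1]; [:: 2; 3; 0]]; [::]; [::]; [::]; [:: [:: 1; 2; 3]; [:: 2; 3; 0]; [:: 1; 0; 3]; [:: 2; 1; 0]]; [::]; [::]; [::]; [:: [:: 2; 3; 2; 1; 0]; [:: 0; 1; 2]; [:: 2; 3; 0; 1; 0]; [:: 0; 3; 2]]; [:: [:: 2; 1; 2; 3; 0]; [:: 0; 3; 2]; [:: 2; 1; 0; 3; 0]; [:: 0; 1; 2]]; [::]];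
  [:: [:: [:: 1]; [:: 3; 2; 1]; [:: 3]; [:: 3; 0; 1]]; [::]; [:: [:: 3]; [:: 1; 2; 3]; [:: 1]; [:: 1; 0; 3]]; [::]; [:: [:: 0; 1; 2]; [:: 1; 2; 3]; [:: 0; 3; 2]; [:: 1; 0; 3]]; [::]; [::]; [::]; [:: [:: 0; 3; 2]; [:: 3; 2; 1]; [:: 0; 1; 2]; [:: 3; 0; 1]]; [::]; [::]; [::]; [:: [:: 2; 1; 0]; [:: 2; 3; 2; 1; 0]; [:: 2; 3; 0]; [:: 2; 3; 0; 1; 0]]; [::]; [::]; [:: [:: 2; 3; 0]; [:: 2; 1; 2; 3; 0]; [:: 2; 1; 0]; [:: 2; 1; 0; 3; 0]]];
  [:: [:: [:: 1]; [:: 1; 2; 3]; [:: 3]; [:: 1; 0; 3]]; [::]; [:: [:: 3]; [:: 3; 2; 1]; [:: 1]; [:: 3; 0; 1]]; [::]; [::]; [::]; [::]; [:: [:: 2; 1; 0]; [:: 3; 2; 1]; [:: 2; 3; 0]; [:: 3; 0; 1]]; [::]; [::]; [::]; [:: [:: 2; 3; 0]; [:: 1; 2; 3]; [:: 2; 1; 0]; [:: 1; 0; 3]]; [:: [:: 0; 1; 2]; [:: 2; 3; 2; 1; 0]; [:: 0; 3; 2]; [:: 2; 3; 0; 1; 0]]; [::]; [::]; [:: [:: 0; 3; 2]; [:: 2; 1; 2; 3; 0]; [:: 0; 1; 2]; [:: 2; 1; 0; 3; 0]]];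
  [:: [::]; [:: [:: 3; 2; 1]; [:: 1]; [:: 3; 0; 1]; [:: 3]]; [::]; [:: [:: 1; 2; 3]; [:: 3]; [:: 1; 0; 3]; [:: 1]]; [::]; [::]; [:: [:: 1; 2; 3]; [:: 0; 1; 2]; [:: 1; 0; 3]; [:: 0; 3; 2]]; [::]; [::]; [::]; [:: [:: 3; 2; 1]; [:: 0; 3; 2]; [:: 3; 0; 1]; [:: 0; 1; 2]]; [::]; [::]; [:: [:: 2; 3; 2; 1; 0]; [:: 2; 1; 0]; [:: 2; 3; 0; 1; 0]; [:: 2; 3; 0]]; [:: [:: 2; 1; 2; 3; 0]; [:: 2; 3; 0]; [:: 2; 1; 0; 3; 0]; [:: 2; 1; 0]]; [::]];
  [:: [::]; [::]; [::]; [::]; [::]; [:: [:: 1; 0; 3]; [:: 3; 0; 1; 2; 1]; [:: 1; 2; 3]; [:: 3; 0; 3; 2; 1]]; [:: [:: 3; 0; 1]; [:: 3; 0; 1; 2; 1]; [:: 3; 2; 1]; [:: 3; 0; 3; 2; 1]]; [::]; [::]; [:: [:: 3; 0; 1]; [:: 3; 2; 3; 0; 1]; [:: 3; 2; 1]; [:: 3; 2; 1; 0; 1]]; [:: [:: 1; 0; 3]; [:: 3; 2; 3; 0; 1]; [:: 1; 2; 3]; [:: 3; 2; 1; 0; 1]]; [::]; [::]; [:: [:: 2; 1; 0; 3; 0]; [:: 3; 0; 1; 2; 1]; [:: 2; 1; 2; 3; 0]; [:: 3; 0; 3; 2; 1]]; [:: [:: 2; 3; 0; 1; 0]; [:: 3;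 2; 3; 0; 1]; [:: 2; 3; 2; 1; 0]; [:: 3; 2; 1; 0; 1]]; [::]];
  [:: [::]; [::]; [::]; [::]; [:: [:: 3; 0; 1; 2; 1]; [:: 3; 0; 1]; [:: 3; 0; 3; 2; 1]; [:: 3; 2; 1]]; [::]; [::]; [:: [:: 3; 0; 1; 2; 1]; [:: 1; 0; 3]; [:: 3; 0; 3; 2; 1]; [:: 1; 2; 3]]; [:: [:: 3; 2; 3; 0; 1]; [:: 1; 0; 3]; [:: 3; 2; 1; 0; 1]; [:: 1; 2; 3]]; [::]; [::]; [:: [:: 3; 2; 3; 0; 1]; [:: 3; 0; 1]; [:: 3; 2; 1; 0; 1]; [:: 3; 2; 1]]; [:: [:: 3; 0; 1; 2; 1]; [:: 2; 1; 0; 3; 0]; [:: 3; 0; 3; 2; 1]; [:: 2; 1; 2; 3; 0]]; [::]; [::]; [:: [:: 3; 2; 3; 0; 1]; [:: 2; 3; 0; 1; 0]; [:: 3; 2; 1; 0; 1]; [:: 2; 3; 2; 1; 0]]];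
  [:: [::]; [::]; [::]; [::]; [:: [:: 3; 2; 1; 0; 1]; [:: 3; 2; 1]; [:: 3; 2; 3; 0; 1]; [:: 3; 0; 1]]; [::]; [::]; [:: [:: 3; 2; 1; 0; 1]; [:: 1; 2; 3]; [:: 3; 2; 3; 0; 1]; [:: 1; 0; 3]]; [:: [:: 3; 0; 3; 2; 1]; [:: 1; 2; 3]; [:: 3; 0; 1; 2; 1]; [:: 1; 0; 3]]; [::]; [::]; [:: [:: 3; 0; 3; 2; 1]; [:: 3; 2; 1]; [:: 3; 0; 1; 2; 1]; [:: 3; 0; 1]]; [:: [:: 3; 2; 1; 0; 1]; [:: 2; 3; 2; 1; 0]; [:: 3; 2; 3; 0; 1]; [:: 2; 3; 0; 1; 0]]; [::]; [::]; [:: [:: 3; 0; 3; 2; 1]; [:: 2; 1; 2; 3; 0]; [:: 3; 0; 1; 2; 1]; [:: 2; 1; 0; 3; 0]]];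
  [:: [::]; [::]; [::]; [::]; [::]; [:: [:: 1; 2; 3]; [:: 3; 2; 1; 0; 1]; [:: 1; 0; 3]; [:: 3; 2; 3; 0; 1]]; [:: [:: 3; 2; 1]; [:: 3; 2; 1; 0; 1]; [:: 3; 0; 1]; [:: 3; 2; 3; 0; 1]]; [::]; [::]; [:: [:: 3; 2; 1]; [:: 3; 0; 3; 2; 1]; [:: 3; 0; 1]; [:: 3; 0; 1; 2; 1]]; [:: [:: 1; 2; 3]; [:: 3; 0; 3; 2; 1]; [:: 1; 0; 3]; [:: 3; 0; 1; 2; 1]]; [::]; [::]; [:: [:: 2; 3; 2; 1; 0]; [:: 3; 2; 1; 0; 1]; [:: 2; 3; 0; 1; 0]; [:: 3; 2; 3; 0; 1]]; [:: [:: 2; 1; 2; 3; 0]; [:: 3; 0; 3; 2; 1]; [:: 2; 1; 0; 3; 0]; [:: 3; 0; 1; 2; 1]]; [::]]].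
Definition rwords : seq (seq nat) := [:: [:: 0];
  [:: 1];
  [:: 2];
  [:: 3];
  [:: 3; 0; 1];
  [:: 0; 1; 2];
  [:: 2; 1; 0];
  [:: 1; 0; 3];
  [:: 3; 2; 1];
  [:: 0; 3; 2];
  [:: 2; 3; 0];
  [:: 1; 2; 3];
  [:: 2; 1; 0; 3; 0];
  [:: 3; 0; 1; 2; 1];
  [:: 3; 0; 3; 2; 1];
  [:: 2; 1; 2; 3; 0]].
Definition certsA : seq (seq nat) := [:: [:: 2; 1; 1; 1; 2];
  [:: 0; 0; 1; 2; 2; 2];
  [:: 0; 1; 1; 1; 2];
  [:: 0; 0; 1; 1; 1; 2];
  [:: 1; 1; 1; 2];
  [:: 1; 0; 2; 1; 1; 2; 2];
  [:: 1; 2; 2; 2];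
  [:: 0; 1; 2; 2; 1; 1; 2];
  [:: 0; 0; 1; 2];
  [:: 0; 1; 2];
  [:: 1; 2; 2; 1; 1; 2];
  [:: 1; 2]].
Definition certsB : seq (seq nat) := [:: [:: 1; 1; 1; 2];
  [:: 0; 0; 1; 2; 2; 2];
  [:: 1; 2; 2; 2];
  [:: 0; 1; 2; 2; 2];
  [:: 1; 2];
  [:: 0; 0; 1; 2];
  [:: 0; 1; 2];
  [:: 0; 2; 1; 1; 1; 2];
  [:: 2; 1; 1; 1; 2];
  [:: 1; 1; 0; 0; 1; 2]].
Definition certsC : seq (seq nat) := [:: [:: 1; 2; 2; 2; 3];
  [:: 1; 1; 1; 2; 3];
  [:: 2; 1; 1; 1; 2; 3];
  [:: 1; 2; 3; 3; 2; 2; 3];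
  [:: 0; 1; 2; 3; 3; 2; 2; 3];
  [:: 0; 1; 2; 2; 1; 1; 2; 3];
  [:: 0; 0; 1; 2; 2; 1; 1; 2; 3];
  [:: 1; 2; 2; 1; 1; 2; 3];
  [:: 1; 0; 0; 1; 1; 2; 3];
  [:: 1; 0; 0; 0; 1; 2; 3];
  [:: 0; 0; 1; 2; 3];
  [:: 1; 1; 0; 0; 1; 2; 3];
  [:: 1; 2; 2; 2; 2; 2; 3]].


Definition z0q : zq := (0,0,0,0).
Definition z0 : zmx := (z0q,z0q,z0q,z0q).
Definition el i := nth z0 els i.
Definition gen3 g := nth 0%N [:: 1; 2; 3]%N g.
Definition gm g k := nth 0%N (nth [::] gtab g) k.
Definition wordn i := nth [::] wordtab i.
Definition mulm i j := if (j < 144)%N then foldr gm j (wordn i) else 0%N.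
Definition invm i := nth 0%N invtab i.
Definition phi i := phiz (el i).

Definition gencheck := all (fun g => all (fun k =>
   zmxmul (el (gen3 g)) (el k) == zmxscale 4 (el (gm g k))) (iota 0 144)) (iota 0 3).
Lemma gencheckP : gencheck. Proof. vm_compute; reflexivity. Qed.

Definition wordcheck := all (fun i => (foldr gm 0%N (wordn i) == i) && all (fun g => g < 3)%N (wordn i))
  (iota 0 144).
Lemma wordcheckP : wordcheck. Proof. vm_compute; reflexivity. Qed.

Lemma gtab_rng : all (fun s => all (fun k => k < 144)%N s) gtab.
Proof. vm_compute; reflexivity. Qed.
Lemma invtab_rng : all (fun k => k < 144)%N invtab.
Proof. vm_compute; reflexivity. Qed.

Lemma gm_lt g k : (gm g k < 144)%N.
Proof.
rewrite /gm; case: (ltnP g (size gtab)) => hi; last by rewrite (nth_default [::] hi) nth_nil.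
have := allP gtab_rng _ (mem_nth [::] hi) => /allP Hk.
case: (ltnP k (size (nth [::] gtab g))) => hj; last by rewrite nth_default.
exact: Hk _ (mem_nth 0%N hj).
Qed.

Lemma foldr_gm_lt w j : (j < 144)%N -> (foldr gm j w < 144)%N.
Proof. by case: w => [|g w] //= _; exact: gm_lt. Qed.

Lemma mulm_lt i j : (mulm i j < 144)%N.
Proof. by rewrite /mulm; case: ifP => // hj; exact: foldr_gm_lt. Qed.

Lemma invm_lt i : (invm i < 144)%N.
Proof.
rewrite /invm; case: (ltnP i (size invtab)) => hi; last by rewrite nth_default.
exact: allP invtab_rng _ (mem_nth 0%N hi).
Qed.

Lemma phiG g k : (g < 3)%N -> (k < 144)%N -> phi (gen3 g) * phi k = phi (gm g k).
Proof.
move=> hg hk; apply: phizM.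
have := allP gencheckP g; rewrite mem_iota add0n => /(_ hg) /allP /(_ k).
by rewrite mem_iota add0n => /(_ hk) /eqP.
Qed.

Lemma phi_foldr w j : all (fun g => g < 3)%N w -> (j < 144)%N ->
  phi (foldr gm j w) = foldr (fun g acc => phi (gen3 g) * acc) 1 w * phi j.
Proof.
elim: w => [|g w IH] /=; first by move=> _ _; rewrite mul1r.
case/andP => hg hw hj.
by rewrite -phiG // ?foldr_gm_lt // IH // mulrA.
Qed.

Lemma phi0 : phi 0 = 1.
Proof.
rewrite /phi /phiz /el /=; apply/matrixP => i j; rewrite !mxE.
case: i => [[|[|//]] ?]; case: j => [[|[|//]] ?] /=; rewrite /iota4 /=; by field.
Qed.

Lemma phiM i j : (i < 144)%N -> (j < 144)%N -> phi i * phi j = phi (mulm i j).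
Proof.
move=> hi hj.
have := allP wordcheckP i; rewrite mem_iota add0n => /(_ hi) /andP[/eqP Ei Hw].
rewrite /mulm hj phi_foldr // -{1}Ei phi_foldr // phi0 mulr1.
reflexivity.
Qed.

Lemma invcheckP : all (fun i => mulm (invm i) i == 0%N) (iota 0 144).
Proof. vm_compute; reflexivity. Qed.

Lemma phiV i : (i < 144)%N -> phi i \is a GRing.unit /\ (phi i)^-1 = phi (invm i).
Proof.
move=> hi.
have H : phi (invm i) * phi i = 1.
  rewrite phiM ?invm_lt //.
  have := allP invcheckP i; rewrite mem_iota add0n => /(_ hi) /eqP ->.
  exact: phi0.
have H' := mulmx1C H.
have [Hu _] := mulmx1_unit H'.
split => //.
by rewrite -[LHS]mul1r -H -mulrA mulrV // mulr1.
Qed.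

Lemma phi1 : phi 1 = t_mx.
Proof.
rewrite /phi /phiz /el /t_mx /=; congr (_ *: _); apply/matrixP => i j; rewrite !mxE.
case: i => [[|[|//]] ?]; case: j => [[|[|//]] ?] /=; rewrite /iota4 /=; ring.
Qed.

Lemma phi2 : phi 2 = u_mx.
Proof.
rewrite /phi /phiz /el /u_mx /t_mx /=; apply/matrixP => i j; rewrite !mxE.
case: i => [[|[|//]] ?]; case: j => [[|[|//]] ?] /=; rewrite ?mxE /iota4 /=; ring.
Qed.

Lemma phi3 : phi 3 = s_mx.
Proof.
rewrite /phi /phiz /el /s_mx /=; apply/matrixP => i j; rewrite !mxE.
case: i => [[|[|//]] ?]; case: j => [[|[|//]] ?] /=; rewrite /iota4 /=; by field.
Qed.


Lemma gen_mulC (gens : seq M) A B :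
  generated gens A -> generated gens B -> generated gens (A * B).
Proof.
elim=> [|x g Hx _ IH|x g Hx _ IH] HB; first by rewrite mul1r.
- by rewrite -mulrA; apply: gen_mul => //; exact: IH.
- by rewrite -mulrA; apply: gen_mulV => //; exact: IH.
Qed.

Lemma gen_in (gens : seq M) x : x \in gens -> generated gens x.
Proof. by move=> Hx; rewrite -[x]mulr1; apply: gen_mul => //; exact: gen_one. Qed.

Lemma gen_sub (gens gens' : seq M) A :
  (forall x, x \in gens -> generated gens' x /\ generated gens' x^-1) ->
  generated gens A -> generated gens' A.
Proof.
move=> Hs; elim=> [|x g Hx _ IH|x g Hx _ IH]; first exact: gen_one.
- by apply: gen_mulC => //; case: (Hs x Hx).
- by apply: gen_mulC => //; case: (Hs x Hx).
Qed.

Definition wev (lt : nat -> nat) (w : seq nat) : nat :=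
  foldr (fun l acc => mulm (lt l) acc) 0%N w.

Lemma wev_lt lt w : (wev lt w < 144)%N.
Proof. by case: w => [|l w] //=; exact: mulm_lt. Qed.

Lemma wev_gen (gens : seq M) lt w :
  (forall l, l \in w -> (lt l < 144)%N /\
     (phi (lt l) \in gens \/ exists j, [/\ (j < 144)%N, lt l = invm j & phi j \in gens])) ->
  generated gens (phi (wev lt w)).
Proof.
elim: w => [|l w IH] H /=; first by rewrite phi0; exact: gen_one.
have [hl Hl] := H l (mem_head _ _).
have IH' : generated gens (phi (wev lt w)).
  by apply: IH => l' Hl'; apply: H; rewrite inE Hl' orbT.
rewrite -phiM ?wev_lt //.
case: Hl => [Hin|[j [hj -> Hj]]]; first exact: gen_mul.
by have [_ <-] := phiV hj; exact: gen_mulV.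
Qed.

Definition closedby (j : nat) (S : seq nat) :=
  all (fun i => (mulm j i \in S) && (mulm (invm j) i \in S)) S.

Lemma gen_lift (gens : seq M) (S : seq nat) A :
  (0%N \in S) -> all (fun k => k < 144)%N S ->
  (forall x, x \in gens -> exists j, [/\ (j < 144)%N, x = phi j & closedby j S]) ->
  generated gens A -> exists i, i \in S /\ A = phi i.
Proof.
move=> H0 HS Hg; elim=> [|x g Hx _ [i [Hi ->]]|x g Hx _ [i [Hi ->]]].
- by exists 0%N; rewrite phi0.
- have [j [hj -> Hc]] := Hg x Hx.
  have hi : (i < 144)%N by exact: allP HS i Hi.
  exists (mulm j i); rewrite phiM //; split => //.
  by have /andP[] := allP Hc i Hi.
- have [j [hj -> Hc]] := Hg x Hx.
  have hi : (i < 144)%N by exact: allP HS i Hi.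
  have [_ ->] := phiV hj.
  exists (mulm (invm j) i); rewrite phiM ?invm_lt //; split => //.
  by have /andP[] := allP Hc i Hi.
Qed.

Lemma G5l_prop : [&& 0%N \in G5l, all (fun k => k < 144)%N G5l,
  closedby 1 G5l & closedby 2 G5l].
Proof. vm_compute; reflexivity. Qed.

Lemma G5_lift A : G5 A -> exists i, i \in G5l /\ A = phi i.
Proof.
have /and4P[H0 HS H1 H2] := G5l_prop.
apply: gen_lift; [exact: H0 | exact: HS | ] => x; rewrite in_cons => /orP[/eqP ->|].
  exists 1%N; split; [done | by rewrite phi1 | exact: H1].
rewrite in_cons in_nil orbF => /eqP ->.
exists 2%N; split; [done | by rewrite phi2 | exact: H2].
Qed.

Lemma closedby_all j : closedby j (iota 0 144).
Proof.
apply/allP => i _; rewrite !mem_iota !add0n.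
by rewrite mulm_lt mulm_lt.
Qed.

Lemma G7_lift A : G7 A -> exists i, (i < 144)%N /\ A = phi i.
Proof.
move=> HA; have [] := @gen_lift _ (iota 0 144) _ _ _ _ HA.
- by rewrite mem_iota.
- by apply/allP => k; rewrite mem_iota.
- move=> x; rewrite in_cons => /orP[/eqP ->|].
    exists 3%N; split; [done | by rewrite phi3 | exact: closedby_all].
  rewrite in_cons => /orP[/eqP ->|].
    exists 1%N; split; [done | by rewrite phi1 | exact: closedby_all].
  rewrite in_cons in_nil orbF => /eqP ->.
  exists 2%N; split; [done | by rewrite phi2 | exact: closedby_all].
by move=> i [Hi ->]; exists i; split => //; move: Hi; rewrite mem_iota.
Qed.


Definition zqnorm (x : zq) : int :=
  let: (a0,a1,a2,a3) := x in
  let al := a0*a0 + 3*(a1*a1) + a2*a2 + 3*(a3*a3) in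
  let be := 2*(a0*a1 + a2*a3) in al*al - 3*(be*be).

Lemma normid (A0 A1 A2 A3 r i : algC) : r * r = 3 -> i * i = -1 ->
  let al := A0*A0 + 3*(A1*A1) + A2*A2 + 3*(A3*A3) in
  let be := 2*(A0*A1 + A2*A3) in
  (A0 + A1*r + A2*i + A3*(i*r)) * (A0 + A1*r - A2*i - A3*(i*r)) * (al - be*r)
  = al*al - 3*(be*be).
Proof.
move=> Hr Hi al be.
pose P := A0 + A1*r; pose Q := A2 + A3*r.
transitivity (al*al - 3*(be*be) - be*be*(r*r - 3) +
  ((A1*A1 + A3*A3)*(r*r - 3) - Q*Q*(i*i + 1)) * (al - be*r)).
  rewrite /al /be /Q; ring.
by rewrite Hr Hi; ring.
Qed.

Lemma iota4_eq0 x : iota4 x = 0 -> zqnorm x = 0.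
Proof.
case: x => [[[a0 a1] a2] a3] /= H.
have Hr : sq3 * sq3 = 3 by exact: sq3sq.
have Hi : 'i * 'i = -1 :> algC by exact: mulCii.
have N := normid a0%:~R a1%:~R a2%:~R a3%:~R Hr Hi.
rewrite /= H !mul0r in N.
have E : ((zqnorm (a0,a1,a2,a3))%:~R : algC) = 0.
  rewrite N /zqnorm !(intrD, intrB, intrM); ring.
by apply/eqP; rewrite -(intr_eq0 algC); apply/eqP.
Qed.

Definition nz (x : zq) : bool := zqnorm x != 0.
Lemma nzP x : nz x -> iota4 x != 0.
Proof. by move=> H; apply/eqP => /iota4_eq0 /eqP; rewrite (negbTE H). Qed.

Definition zqsub (x y : zq) : zq := zqadd x (zqscale (-1) y).
Lemma iota4B x y : iota4 (zqsub x y) = iota4 x - iota4 y.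
Proof. by rewrite /zqsub iota4D iota4S mulN1r. Qed.

Definition diffz (i j : nat) : bool :=
  let: (a,b,c,d) := el i in let: (a',b',c',d') := el j in
  [|| nz (zqsub a a'), nz (zqsub b b'), nz (zqsub c c') | nz (zqsub d d')].

Lemma phi_psi i j : phi i = phi j -> psi (el i) = psi (el j).
Proof.
rewrite /phi /phiz => /(congr1 (fun X => 4 *: X)).
have h4 : (4 : algC) != 0 by rewrite pnatr_eq0.
by rewrite !scalerA mulfV // !scale1r.
Qed.

Lemma diffzP i j : diffz i j -> phi i <> phi j.
Proof.
rewrite /diffz => Hd /phi_psi; move: Hd.
case: (el i) => [[[a b] c] d]; case: (el j) => [[[a' b'] c'] d'] /= Hd E.
have E00 := congr1 (fun X : M => X 0 0) E.
have E01 := congr1 (fun X : M => X 0 1) E.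
have E10 := congr1 (fun X : M => X 1 0) E.
have E11 := congr1 (fun X : M => X 1 1) E.
move: E00 E01 E10 E11; rewrite /= !mxE /= => E00 E01 E10 E11.
case/or4P: Hd => /nzP; rewrite iota4B ?E00 ?E01 ?E10 ?E11 subrr eqxx //.
Qed.

Lemma ord2 (i : 'I_2) : i = 0 \/ i = 1.
Proof. by case: i => [[|[|//]] Hi]; [left|right]; apply/val_inj. Qed.

Lemma lift01 : (lift ord0 ord0 : 'I_2) = 1.
Proof. by apply/val_inj. Qed.

Lemma unit22 (X : M) : X 0 0 * X 1 1 - X 0 1 * X 1 0 != 0 -> X \in unitmx.
Proof.
move=> Hd.
pose Y : M := (X 0 0 * X 1 1 - X 0 1 * X 1 0)^-1 *: mx2 (X 1 1) (- X 0 1) (- X 1 0) (X 0 0).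
suff H : X *m Y = 1%:M by case: (mulmx1_unit H).
apply/matrixP => i j; rewrite !mxE !big_ord_recl big_ord0 !mxE /= lift01.
by case: (ord2 i) => ->; case: (ord2 j) => ->; rewrite /= ?mxE /=; field.
Qed.

Definition four : zq := (4,0,0,0).
Definition detz (A : zmx) : zq :=
  let: (a,b,c,d) := A in zqsub (zqmul (zqsub a four) (zqsub d four)) (zqmul b c).
Definition nondeg i := nz (detz (el i)).

Lemma nondeg_notrefl i : nondeg i -> ~ reflection (phi i).
Proof.
rewrite /nondeg /reflection => Hn [_ Hr].
suff Hu : phi i - 1%:M \in unitmx by move: Hr; rewrite mxrank_unit.
apply: unit22; move: Hn.
rewrite /phi /phiz; case: (el i) => [[[a b] c] d] /= /nzP.
rewrite !mxE /= !iota4B !iota4M !iota4B.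
have -> : iota4 four = 4 by rewrite /iota4 /=; ring.
apply: contra => /eqP H; apply/eqP.
have h4 : (4 : algC) != 0 by rewrite pnatr_eq0.
have := congr1 (fun z => 16 * z) H; rewrite mulr0 => <-.
by field.
Qed.

Definition ridn r := nth 0%N rid r.
Definition phir r := phi (ridn r).
Definition clsr r := nth 0%N clsl r.
Definition rinvr r := nth 0%N rinvl r.

Lemma reflcheckP : all (fun i => [|| i \in rid, i == 0%N | nondeg i]) G5l.
Proof. vm_compute; reflexivity. Qed.

Lemma size_rid : size rid = 16%N. Proof. by []. Qed.

Lemma lift_refl A : G5 A -> reflection A -> exists r, (r < 16)%N /\ A = phir r.
Proof.
move=> /G5_lift [i [Hi ->]] Hr.
case/or3P: (allP reflcheckP i Hi) => [Hin|/eqP Hi0|Hn].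
- exists (index i rid); rewrite -size_rid index_mem; split => //.
  by rewrite /phir /ridn nth_index.
- exfalso; move: Hr; rewrite Hi0 phi0 /reflection => [[_]].
  by rewrite subrr mxrank0.
- by case: (nondeg_notrefl Hn Hr).
Qed.

Definition ccheck :=
  all (fun k => has (fun r => (ridn r == mulm (mulm (invm k) 1) k) && (clsr r == 0%N)) (iota 0 16) &&
                has (fun r => (ridn r == mulm (mulm (invm k) 2) k) && (clsr r == 2%N)) (iota 0 16))
      (iota 0 144).
Lemma ccheckP : ccheck. Proof. vm_compute; reflexivity. Qed.

Definition clsinv c := nth 0%N [:: 1; 0; 3; 2]%N c.
Definition rinvcheck :=
  all (fun r => [&& ridn (rinvr r) == invm (ridn r), clsr (rinvr r) == clsinv (clsr r),
                    rinvr r < 16, ridn r < 144 & clsr r < 4]%N) (iota 0 16).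
Lemma rinvcheckP : rinvcheck. Proof. vm_compute; reflexivity. Qed.

Lemma rinv_prop r : (r < 16)%N -> [/\ ridn (rinvr r) = invm (ridn r), clsr (rinvr r) = clsinv (clsr r),
   (rinvr r < 16)%N, (ridn r < 144)%N & (clsr r < 4)%N].
Proof.
move=> hr; have := allP rinvcheckP r; rewrite mem_iota add0n => /(_ hr).
by case/and5P => /eqP -> /eqP -> -> ->.
Qed.

Lemma phir_inv r : (r < 16)%N -> (phir r)^-1 = phir (rinvr r).
Proof.
move=> hr; have [H1 _ _ H4 _] := rinv_prop hr.
by rewrite /phir H1; have [_ ->] := phiV H4.
Qed.

Lemma Rconj_refl (g : nat) (c : nat) (A : M) :
  (g = 1%N /\ c = 0%N) \/ (g = 2%N /\ c = 2%N) ->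
  (exists h, G7 h /\ A = h^-1 * phi g * h) ->
  exists r, [/\ (r < 16)%N, clsr r = c & A = phir r].
Proof.
move=> Hgc [h [/G7_lift [k [hk ->]] ->]].
have [_ ->] := phiV hk.
have := allP ccheckP k; rewrite mem_iota add0n => /(_ hk) /andP[Ht Hu].
case: Hgc => [[-> ->]|[-> ->]].
- case/hasP: Ht => r; rewrite mem_iota add0n => hr /andP[/eqP Hr /eqP Hc].
  exists r; split => //.
  by rewrite /phir Hr -!phiM ?mulm_lt ?invm_lt.
- case/hasP: Hu => r; rewrite mem_iota add0n => hr /andP[/eqP Hr /eqP Hc].
  exists r; split => //.
  by rewrite /phir Hr -!phiM ?mulm_lt ?invm_lt.
Qed.

Lemma K_refl (K : M -> Prop) :
  (K = R1 \/ K = R1inv \/ K = R2 \/ K = R2inv) ->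
  exists kc, (kc < 4)%N /\ forall x, K x -> exists r, [/\ (r < 16)%N, clsr r = kc & x = phir r].
Proof.
case=> [->|[->|[->|->]]].
- exists 0%N; split => // x Hx; apply: (@Rconj_refl 1 0); first by left.
  by rewrite phi1.
- exists 1%N; split => // x Hx.
  have [r [hr hc Hr]] : exists r, [/\ (r < 16)%N, clsr r = 0%N & x^-1 = phir r].
    by apply: (@Rconj_refl 1 0); [left | rewrite phi1].
  have [_ H2 H3 _ _] := rinv_prop hr.
  exists (rinvr r); split => //; first by rewrite H2 hc.
  by rewrite -phir_inv // -Hr invrK.
- exists 2%N; split => // x Hx; apply: (@Rconj_refl 2 2); first by right.
  by rewrite phi2.
- exists 3%N; split => // x Hx.
  have [r [hr hc Hr]] : exists r, [/\ (r < 16)%N, clsr r = 2%N & x^-1 = phir r].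
    by apply: (@Rconj_refl 2 2); [right | rewrite phi2].
  have [_ H2 H3 _ _] := rinv_prop hr.
  exists (rinvr r); split => //; first by rewrite H2 hc.
  by rewrite -phir_inv // -Hr invrK.
Qed.

Definition injcheck := all (fun p => all (fun q => (p == q) || diffz (ridn p) (ridn q)) (iota 0 16)) (iota 0 16).
Lemma injcheckP : injcheck. Proof. vm_compute; reflexivity. Qed.

Lemma phir_inj p q : (p < 16)%N -> (q < 16)%N -> phir p = phir q -> p = q.
Proof.
move=> hp hq E.
have := allP injcheckP p; rewrite mem_iota add0n => /(_ hp) /allP /(_ q).
rewrite mem_iota add0n => /(_ hq) /orP[/eqP //|/diffzP].
by move/(_ E).
Qed.


Definition fam (c : nat) : bool := (2 <= c)%N.

Definition Hcheck :=
  [&& 0%N \in H0l, 0%N \in H1l, all (fun k => k < 144)%N H0l, all (fun k => k < 144)%N H1l,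
   all (fun r => (fam (clsr r) ==> closedby (ridn r) H1l) && (~~ fam (clsr r) ==> closedby (ridn r) H0l)) (iota 0 16),
   all (fun h => diffz 2 h) H0l & all (fun h => diffz 1 h) H1l].
Lemma HcheckP : Hcheck. Proof. vm_compute; reflexivity. Qed.

Lemma other_family (L : seq nat) kc :
  all (fun k => k < 16)%N L -> generates (map phir L) G5 ->
  exists2 c, c \in L & fam (clsr c) != fam kc.
Proof.
move=> HL Hgen.
case: (boolP (has (fun c => fam (clsr c) != fam kc) L)) => [/hasP[c Hc Hf]|Hn].
  by exists c.
exfalso.
have Hall : forall c, c \in L -> fam (clsr c) = fam kc.
  by move=> c Hc; have := hasPn Hn c Hc; rewrite negbK => /eqP.
have /and4P[H00 H10 HS0 /and4P[HS1 Hr Hd0 Hd1]] := HcheckP.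
case Hk: (fam kc).
- have Hg : generated (map phir L) t_mx by apply/Hgen; apply: gen_in; rewrite in_cons eqxx.
  have [] := gen_lift H10 HS1 _ Hg.
    move=> x /mapP[c Hc ->]; exists (ridn c).
    have hc : (c < 16)%N by exact: allP HL c Hc.
    have [_ _ _ h1 _] := rinv_prop hc.
    split; [exact: h1 | reflexivity | ].
    have := allP Hr c; rewrite mem_iota add0n => /(_ hc) /andP[+ _].
    by rewrite (Hall c Hc) Hk.
  move=> h [Hh E]; apply: (diffzP (allP Hd1 h Hh)).
  by rewrite phi1.
- have Hg : generated (map phir L) u_mx.
    by apply/Hgen; apply: gen_in; rewrite in_cons in_cons eqxx orbT.
  have [] := gen_lift H00 HS0 _ Hg.
    move=> x /mapP[c Hc ->]; exists (ridn c).
    have hc : (c < 16)%N by exact: allP HL c Hc.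
    have [_ _ _ h1 _] := rinv_prop hc.
    split; [exact: h1 | reflexivity | ].
    have := allP Hr c; rewrite mem_iota add0n => /(_ hc) /andP[_].
    by rewrite (Hall c Hc) Hk.
  move=> h [Hh E]; apply: (diffzP (allP Hd0 h Hh)).
  by rewrite phi2.
Qed.

Definition pg p q := nth false (nth [::] pgtab p) q.
Definition ltr p q l := nth 0%N [:: ridn p; ridn q; invm (ridn p); invm (ridn q)] l.
Definition wordsok p q :=
  match nth [::] (nth [::] pgwtab p) q with
  | [:: w1; w2; w3; w4] =>
     [&& wev (ltr p q) w1 == 1%N, wev (ltr p q) w2 == 2%N, wev (ltr p q) w3 == invm 1,
         wev (ltr p q) w4 == invm 2 & all (fun w => all (fun l => l < 4)%N w) [:: w1; w2; w3; w4]]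
  | _ => false end.
Definition pgwcheck := all (fun p => all (fun q => pg p q ==> wordsok p q) (iota 0 16)) (iota 0 16).
Lemma pgwcheckP : pgwcheck. Proof. vm_compute; reflexivity. Qed.

Lemma wev_gen4 (gens : seq M) (lt : nat -> nat) (a b : nat) w :
  (lt 0 = a) -> (lt 1 = b) -> (lt 2 = invm a) -> (lt 3 = invm b) ->
  (a < 144)%N -> (b < 144)%N -> phi a \in gens -> phi b \in gens ->
  all (fun l => l < 4)%N w -> generated gens (phi (wev lt w)).
Proof.
move=> E0 E1 E2 E3 ha hb Ha Hb Hw; apply: wev_gen => l Hl.
have : (l < 4)%N := allP Hw l Hl.
case: l Hl => [|[|[|[|//]]]] _ _.
- by rewrite E0; split => //; left.
- by rewrite E1; split => //; left.
- by rewrite E2 invm_lt; split => //; right; exists a.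
- by rewrite E3 invm_lt; split => //; right; exists b.
Qed.

Lemma pg_gen (ys : seq nat) p q :
  p \in ys -> q \in ys -> (p < 16)%N -> (q < 16)%N -> pg p q ->
  forall A, G5 A -> generated (map phir ys) A.
Proof.
move=> Hp Hq hp hq Hpg A HA.
have := allP pgwcheckP p; rewrite mem_iota add0n => /(_ hp) /allP /(_ q).
rewrite mem_iota add0n => /(_ hq); rewrite Hpg /= /wordsok.
case: (nth [::] (nth [::] pgwtab p) q) => [|w1 [|w2 [|w3 [|w4 [|]]]]] //.
case/and5P => /eqP E1 /eqP E2 /eqP E3 /eqP E4 /and5P[Hw1 Hw2 Hw3 Hw4 _].
have [_ _ _ hp' _] := rinv_prop hp.
have [_ _ _ hq' _] := rinv_prop hq.
have Gp : phi (ridn p) \in map phir ys by exact: (map_f phir Hp).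
have Gq : phi (ridn q) \in map phir ys by exact: (map_f phir Hq).
have G := fun w (Hw : all (fun l => l < 4)%N w) =>
  @wev_gen4 (map phir ys) (ltr p q) (ridn p) (ridn q) w erefl erefl erefl erefl hp' hq' Gp Gq Hw.
have G1 := G w1 Hw1; rewrite E1 in G1.
have G2 := G w2 Hw2; rewrite E2 in G2.
have G3 := G w3 Hw3; rewrite E3 in G3.
have G4 := G w4 Hw4; rewrite E4 in G4.
apply: (gen_sub _ HA) => x; rewrite in_cons => /orP[/eqP ->|].
  rewrite -phi1; have [_ ->] := phiV (isT : (1 < 144)%N).
  by split.
rewrite in_cons in_nil orbF => /eqP ->.
rewrite -phi2; have [_ ->] := phiV (isT : (2 < 144)%N).
by split.
Qed.

Definition ltu l := nth 0%N [:: 1; 2; invm 1; invm 2]%N l.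
Definition rwcheck := all (fun r => (wev ltu (nth [::] rwords r) == ridn r) &&
   all (fun l => l < 4)%N (nth [::] rwords r)) (iota 0 16).
Lemma rwcheckP : rwcheck. Proof. vm_compute; reflexivity. Qed.

Lemma phir_G5 r : (r < 16)%N -> G5 (phir r).
Proof.
move=> hr; have := allP rwcheckP r; rewrite mem_iota add0n => /(_ hr) /andP[/eqP E Hw].
rewrite /phir -E.
apply: (@wev_gen4 _ ltu 1 2) => //.
- by rewrite phi1 in_cons eqxx.
- by rewrite phi2 in_cons in_cons eqxx orbT.
Qed.

Lemma prefix_G5 (ys : seq nat) A :
  all (fun k => k < 16)%N ys -> generated (map phir ys) A -> G5 A.
Proof.
move=> Hys; apply: gen_sub => x /mapP[r Hr ->].
have hr : (r < 16)%N by exact: allP Hys r Hr.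
have [_ _ h3 _ _] := rinv_prop hr.
by rewrite phir_inv //; split; apply: phir_G5.
Qed.


Definition conjr y w := nth 0%N (nth [::] ctab y) w.

Definition ctabcheck := all (fun y => all (fun w =>
   [&& conjr y w < 16, ridn (conjr y w) == mulm (mulm (invm (ridn y)) (ridn w)) (ridn y),
       clsr (conjr y w) == clsr w & (conjr y w == y) ==> (w == y)]%N) (iota 0 16)) (iota 0 16).
Lemma ctabcheckP : ctabcheck. Proof. vm_compute; reflexivity. Qed.

Lemma conjr_prop y w : (y < 16)%N -> (w < 16)%N ->
  [/\ (conjr y w < 16)%N, phir (conjr y w) = (phir y)^-1 * phir w * phir y,
      clsr (conjr y w) = clsr w & (conjr y w = y -> w = y)].
Proof.
move=> hy hw.
have := allP ctabcheckP y; rewrite mem_iota add0n => /(_ hy) /allP /(_ w).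
rewrite mem_iota add0n => /(_ hw) /and4P[h1 /eqP h2 /eqP h3 h4].
split => //.
- have [_ _ _ hy' _] := rinv_prop hy; have [_ _ _ hw' _] := rinv_prop hw.
  have [_ E] := phiV hy'.
  by rewrite /phir h2 -!phiM ?mulm_lt ?invm_lt // E.
- by move=> E; move: h4; rewrite E eqxx => /eqP.
Qed.

Definition hmr (i : nat) (L : seq nat) : seq nat :=
  take i L ++ [:: nth 0%N L i.+1; conjr (nth 0%N L i.+1) (nth 0%N L i)] ++ drop i.+2 L.

Inductive reachr : seq nat -> seq nat -> Prop :=
| rr_refl L : reachr L L
| rr_step i L L' : (i.+1 < size L)%N -> reachr (hmr i L) L' -> reachr L L'.

Definition all16 (L : seq nat) := all (fun k => k < 16)%N L.

Lemma size_hmr i L : (i.+1 < size L)%N -> size (hmr i L) = size L.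
Proof.
move=> h; rewrite /hmr !size_cat size_take size_drop /=.
have h' : (i < size L)%N by apply: ltn_trans h.
rewrite h'; lia.
Qed.

Lemma nth16 L k : all16 L -> (nth 0%N L k < 16)%N.
Proof.
move=> HL; case: (ltnP k (size L)) => hk; last by rewrite nth_default.
exact: allP HL _ (mem_nth 0%N hk).
Qed.

Lemma all16_hmr i L : (i.+1 < size L)%N -> all16 L -> all16 (hmr i L).
Proof.
move=> h HL; rewrite /hmr /all16 !all_cat /=.
have [h1 _ _ _] := conjr_prop (nth16 i.+1 HL) (nth16 i HL).
rewrite h1 (nth16 _ HL) /=.
apply/andP; split; apply/allP => x Hx; apply: (allP HL).
- exact: mem_take Hx.
- exact: mem_drop Hx.
Qed.

Lemma reachr_all16 L L' : reachr L L' -> all16 L -> all16 L'.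
Proof.
elim=> [//|i L0 L1 h _ IH] H; apply: IH; exact: all16_hmr.
Qed.

Lemma reachr_trans A B C : reachr A B -> reachr B C -> reachr A C.
Proof.
elim=> [//|i L L' h _ IH] H; apply: (rr_step h); exact: IH.
Qed.

Lemma hmr_cons i z L : hmr i.+1 (z :: L) = z :: hmr i L.
Proof. by []. Qed.

Lemma reachr_cons z L L' : reachr L L' -> reachr (z :: L) (z :: L').
Proof.
elim=> [L0|i L0 L1 h _ IH]; first exact: rr_refl.
by apply: (@rr_step i.+1) => //; rewrite hmr_cons.
Qed.

Lemma hmr_cat i B R : (i.+1 < size B)%N -> hmr i (B ++ R) = hmr i B ++ R.
Proof.
move=> h; have h' : (i < size B)%N by apply: ltn_trans h.
rewrite /hmr take_cat h' !nth_cat h h' -!catA; congr (_ ++ _); rewrite /=.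
congr (_ :: _ :: _).
rewrite drop_cat; case: ltnP => h2 //.
have -> : (i.+2 - size B = 0)%N by lia.
by rewrite drop0 drop_oversize.
Qed.

Lemma reachr_cat B B' R : reachr B B' -> reachr (B ++ R) (B' ++ R).
Proof.
elim=> [L0|i L0 L1 h _ IH]; first exact: rr_refl.
apply: (@rr_step i); first by rewrite size_cat; apply: leq_trans h (leq_addr _ _).
by rewrite hmr_cat.
Qed.

Lemma hmr_mid l p q l2 : hmr (size l) (l ++ p :: q :: l2) = l ++ q :: conjr q p :: l2.
Proof.
have E1 : nth 0%N (l ++ p :: q :: l2) (size l) = p by rewrite nth_cat ltnn subnn.
have E2 : nth 0%N (l ++ p :: q :: l2) (size l).+1 = q.
  rewrite nth_cat; case: ltnP => h; first (exfalso; lia).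
  by rewrite subSnn.
have E3 : drop (size l).+2 ((l ++ [:: p; q]) ++ l2) = l2.
  by rewrite drop_size_cat // size_cat addn2.
rewrite -catA /= in E3.
by rewrite /hmr take_size_cat // E1 E2 E3.
Qed.

Lemma pickL l1 y l2 : reachr (l1 ++ y :: l2) (y :: map (conjr y) l1 ++ l2).
Proof.
elim/last_ind: l1 l2 => [|l w IH] l2; first exact: rr_refl.
rewrite cat_rcons map_rcons cat_rcons.
apply: (@rr_step (size l)); first by rewrite size_cat /=; lia.
rewrite hmr_mid; exact: IH.
Qed.

Definition sgm2 (pq : nat * nat) := (pq.2, conjr pq.2 pq.1).

Lemma reach_iter k l p q l2 :
  reachr (l ++ p :: q :: l2) (l ++ (iter k sgm2 (p,q)).1 :: (iter k sgm2 (p,q)).2 :: l2).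
Proof.
elim: k => [|k IH]; first exact: rr_refl.
apply: (reachr_trans IH).
apply: (@rr_step (size l)); first by rewrite size_cat /=; lia.
rewrite hmr_mid; exact: rr_refl.
Qed.

Definition sigcheck := all (fun x => all (fun r =>
   has (fun k => (iter k sgm2 (x, r)).2 == x) (iota 0 40)) (iota 0 16)) (iota 0 16).
Lemma sigcheckP : sigcheck. Proof. vm_compute; reflexivity. Qed.

Lemma iter16 k x r : (x < 16)%N -> (r < 16)%N ->
  ((iter k sgm2 (x, r)).1 < 16)%N /\ ((iter k sgm2 (x, r)).2 < 16)%N.
Proof.
move=> hx hr; elim: k => [|k [IH1 IH2]] //=.
by split => //; have [] := conjr_prop IH2 IH1.
Qed.

Lemma move_end R l x : (x < 16)%N -> all16 R ->
  exists R', all16 R' /\ reachr (l ++ x :: R) (l ++ R' ++ [:: x]).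
Proof.
move=> hx; elim: R l => [|r R IH] l HR; first by exists [::]; split => //; exact: rr_refl.
move: HR; rewrite /all16 /= => /andP[hr HR].
have := allP sigcheckP x; rewrite mem_iota add0n => /(_ hx) /allP /(_ r).
rewrite mem_iota add0n => /(_ hr) /hasP[k _ /eqP Ek].
have [h1 _] := iter16 k hx hr.
have R1 := reach_iter k l x r R; rewrite Ek in R1.
have [R' [HR' R2]] := IH (rcons l (iter k sgm2 (x, r)).1) HR.
exists ((iter k sgm2 (x, r)).1 :: R'); split; first by rewrite /all16 /= h1.
apply: (reachr_trans R1).
by move: R2; rewrite !cat_rcons.
Qed.

Lemma hm_map i L : (i.+1 < size L)%N -> all16 L ->
  hurwitz_move i (map phir L) = map phir (hmr i L).
Proof.
move=> h HL; have h' : (i < size L)%N by apply: ltn_trans h.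
rewrite /hurwitz_move /hmr !map_cat map_take map_drop /=.
rewrite !(nth_map 0%N) //.
have [_ E _ _] := conjr_prop (nth16 i.+1 HL) (nth16 i HL).
by rewrite E.
Qed.

Lemma reachr_map L L' : all16 L -> reachr L L' -> hurwitz_reach (map phir L) (map phir L').
Proof.
move=> HL H; elim: H HL => [L0 _|i L0 L1 h H IH HL]; first exact: hr_refl.
apply: (@hr_step i); first by rewrite size_map.
rewrite hm_map //; apply: IH; exact: all16_hmr.
Qed.


Definition applyc (p : seq nat) (B : seq nat) := foldl (fun L i => hmr i L) B p.
Definition validc (p : seq nat) (B : seq nat) := all (fun i => i.+2 <= size B)%N p.

Lemma applyc_reach p B : validc p B -> reachr B (applyc p B) /\ size (applyc p B) = size B.
Proof.
elim: p B => [|i p IH] B /=; first by split => //; exact: rr_refl.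
case/andP => hi Hp.
have hs := size_hmr hi.
have [R S] : reachr (hmr i B) (applyc p (hmr i B)) /\ size (applyc p (hmr i B)) = size (hmr i B).
  by apply: IH; rewrite /validc hs.
split; last by rewrite S hs.
exact: rr_step hi R.
Qed.

Definition pgok (ys : seq nat) := has (fun p => has (fun q => pg p q) ys) ys.
Definition certok B x p :=
  let Y := applyc p B in
  [&& validc p B, Y == rcons (take (size B).-1 Y) x & pgok (take (size B).-1 Y)].
Definition chk cs B x := has (certok B x) cs.

Lemma chk_sound cs B x : chk cs B x -> exists ys, reachr B (rcons ys x) /\ pgok ys.
Proof.
case/hasP => p _; rewrite /certok => /and3P[Hv /eqP E Hp].
exists (take (size B).-1 (applyc p B)); split => //.
rewrite -E; exact: (applyc_reach Hv).1.
Qed.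

Definition mem16 k := [seq r <- iota 0 16 | clsr r == k].
Definition goodO k := nth 0%N [:: 2; 3; 0; 1]%N k.
Definition badO k := nth 0%N [:: 3; 2; 1; 0]%N k.

Definition checkA := all (fun kc => all (fun a => all (fun b => (a == b) || all (fun x =>
  all (fun c => all (fun d => chk certsA [:: a; b; c; d] x) (iota 0 16)) (mem16 (goodO kc)))
  (mem16 kc)) (mem16 kc)) (mem16 kc)) (iota 0 4).
Definition checkB := all (fun kc => all (fun a => all (fun b => (a == b) || all (fun x =>
  all (fun c => all (fun d => chk certsB [:: a; b; c; d] x) (mem16 (clsinv kc))) (mem16 (badO kc)))
  (mem16 kc)) (mem16 kc)) (mem16 kc)) (iota 0 4).
Definition checkC := all (fun kc => all (fun a => all (fun b => (a == b) || all (fun x =>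
  all (fun c => all (fun d => all (fun e => chk certsC [:: a; b; c; d; e] x)
     (mem16 kc ++ mem16 (badO kc))) (mem16 kc ++ mem16 (badO kc))) (mem16 (badO kc)))
  (mem16 kc)) (mem16 kc)) (mem16 kc)) (iota 0 4).

Lemma checkAP : checkA. Proof. vm_compute. reflexivity. Qed.
Lemma checkBP : checkB. Proof. vm_compute. reflexivity. Qed.
Lemma checkCP : checkC. Proof. vm_compute. reflexivity. Qed.


Lemma pick_full L y : y \in L -> all16 L ->
  exists L', [/\ reachr L (y :: L'), all16 L', size L' = (size L).-1,
    (forall w, w \in L -> w <> y -> exists w', w' \in L' /\ (w' = w \/ w' = conjr y w)) &
    (forall z, z \in L' -> exists w, w \in L /\ (z = w \/ z = conjr y w))].
Proof.
case/splitPr => l1 l2 HL.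
have R := pickL l1 y l2.
exists (map (conjr y) l1 ++ l2); split => //.
- by have := reachr_all16 R HL; rewrite /all16 /= => /andP[].
- by rewrite !size_cat size_map /= addnS.
- move=> w; rewrite mem_cat in_cons => /or3P[Hw|/eqP //|Hw] _.
  + by exists (conjr y w); split; [rewrite mem_cat map_f | right].
  + by exists w; split; [rewrite mem_cat Hw orbT | left].
- move=> z; rewrite mem_cat => /orP[/mapP[w Hw ->]|Hz].
  + by exists w; split; [rewrite mem_cat Hw | right].
  + by exists z; split; [rewrite mem_cat in_cons Hz !orbT | left].
Qed.

Lemma in16 L w : all16 L -> w \in L -> (w < 16)%N.
Proof. by move=> HL Hw; exact: allP HL w Hw. Qed.

Lemma cls_lt r : (r < 16)%N -> (clsr r < 4)%N.
Proof. by move=> hr; have [_ _ _ _ ->] := rinv_prop hr. Qed.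

Lemma finish L B R x cs :
  reachr L (B ++ R) -> chk cs B x -> (x < 16)%N -> all16 R ->
  exists ys, reachr L (rcons ys x) /\ pgok ys.
Proof.
move=> HL Hc hx HR.
have [ys0 [R0 P0]] := chk_sound Hc.
have [R' [_ R2]] := move_end ys0 hx HR.
exists (ys0 ++ R'); split.
  apply: (reachr_trans HL); apply: (reachr_trans (reachr_cat R R0)).
  by rewrite cat_rcons rcons_cat -cats1.
by rewrite /pgok has_cat; apply/orP; left; move: P0; apply: sub_has => p; rewrite has_cat => ->.
Qed.

Lemma cls_cases kc k : (kc < 4)%N -> (k < 4)%N -> fam k != fam kc -> k != goodO kc -> k = badO kc.
Proof.
by case: kc => [|[|[|[|//]]]]; case: k => [|[|[|[|//]]]].
Qed.

Lemma cls_cases2 kc k : (kc < 4)%N -> (k < 4)%N -> k != goodO kc -> k != clsinv kc ->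
  (k == kc) || (k == badO kc).
Proof.
by case: kc => [|[|[|[|//]]]]; case: k => [|[|[|[|//]]]].
Qed.

Lemma mem16P k r : (r \in mem16 k) = (r < 16)%N && (clsr r == k).
Proof. by rewrite mem_filter mem_iota add0n andbC. Qed.


Lemma conj_cls y w : (y < 16)%N -> (w < 16)%N -> clsr (conjr y w) = clsr w.
Proof. by move=> hy hw; have [] := conjr_prop hy hw. Qed.

Lemma main_r L kc a b x :
  (kc < 4)%N -> all16 L -> (5 <= size L)%N -> a \in L -> b \in L -> a <> b ->
  clsr a = kc -> clsr b = kc -> (x < 16)%N -> clsr x = kc ->
  (exists2 c, c \in L & fam (clsr c) != fam kc) ->
  exists ys, reachr L (rcons ys x) /\ pgok ys.
Proof.
move=> hkc HL hsz Ha Hb Hab Hca Hcb hx Hcx [c Hc Hfc].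
have ha : (a < 16)%N := in16 HL Ha.
have [L1 [R1 HL1 S1 F1 _]] := pick_full Ha HL.
have [b' [Hb' Eb']] := F1 b Hb (fun E => Hab (esym E)).
have hb : (b < 16)%N := in16 HL Hb.
have hb' : (b' < 16)%N := in16 HL1 Hb'.
have Hcb' : clsr b' = kc by case: Eb' => ->; rewrite ?conj_cls.
have Hab' : a <> b'.
  case: Eb' => -> //; move=> E; apply: Hab.
  by have [_ _ _ H] := conjr_prop ha hb; apply/esym/H/esym.
have Hca' : c <> a by move=> E; move: Hfc; rewrite E Hca eqxx.
have [c' [Hc' Ec']] := F1 c Hc Hca'.
have hc : (c < 16)%N := in16 HL Hc.
have Hcc' : clsr c' = clsr c by case: Ec' => ->; rewrite ?conj_cls.
have [L2 [R2 HL2 S2 F2 B2]] := pick_full Hb' HL1.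
have Hcb'' : c' <> b' by move=> E; move: Hfc; rewrite -Hcc' E Hcb' eqxx.
have [c'' [Hc'' Ec'']] := F2 c' Hc' Hcb''.
have hc' : (c' < 16)%N := in16 HL1 Hc'.
have Hcc'' : clsr c'' = clsr c by rewrite -Hcc'; case: Ec'' => ->; rewrite ?conj_cls.
have R12 : reachr L (a :: b' :: L2) by apply: (reachr_trans R1); exact: reachr_cons.
have hsz2 : (3 <= size L2)%N.
  by rewrite S2 S1; move: hsz; case: (size L) => [|[|[|n]]] //= h; lia.
case: (boolP (has (fun z => clsr z == goodO kc) L2)) => [/hasP[z Hz /eqP Hcz]|Hng].
  have [L3 [R3 HL3 S3 _ _]] := pick_full Hz HL2.
  case E3: L3 => [|d L4]; first by move: S3 hsz2; rewrite E3; case: (size L2) => [|[|n]] //=.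
  rewrite E3 in R3 HL3.
  have hz : (z < 16)%N := in16 HL2 Hz.
  move: HL3; rewrite /all16 /= => /andP[hd HL4].
  apply: (@finish L [:: a; b'; z; d] L4 x certsA) => //.
    by apply: (reachr_trans R12); do 2 apply: reachr_cons.
  have := allP checkAP kc; rewrite mem_iota add0n => /(_ hkc) /allP /(_ a).
  rewrite mem16P ha Hca eqxx => /(_ isT) /allP /(_ b').
  rewrite mem16P hb' Hcb' eqxx => /(_ isT) /orP[/eqP E|]; first by case: Hab'.
  move=> /allP /(_ x); rewrite mem16P hx Hcx eqxx => /(_ isT) /allP /(_ z).
  rewrite mem16P hz Hcz eqxx => /(_ isT) /allP /(_ d).
  by rewrite mem_iota add0n => /(_ hd).
have hc'' : (c'' < 16)%N := in16 HL2 Hc''.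
have Hbad : clsr c'' = badO kc.
  apply: cls_cases => //; first exact: cls_lt.
    by rewrite Hcc''.
  by apply/negP => /eqP E; move: Hng => /hasPn /(_ c'' Hc''); rewrite E eqxx.
have [L3 [R3 HL3 S3 _ B3]] := pick_full Hc'' HL2.
have R123 : reachr L (a :: b' :: c'' :: L3) by apply: (reachr_trans R12); do 2 apply: reachr_cons.
case: (boolP (has (fun z => clsr z == clsinv kc) L3)) => [/hasP[z Hz /eqP Hcz]|Hni].
  have [L4 [R4 HL4 _ _ _]] := pick_full Hz HL3.
  have hz : (z < 16)%N := in16 HL3 Hz.
  apply: (@finish L [:: a; b'; c''; z] L4 x certsB) => //.
    by apply: (reachr_trans R123); do 3 apply: reachr_cons.
  have := allP checkBP kc; rewrite mem_iota add0n => /(_ hkc) /allP /(_ a).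
  rewrite mem16P ha Hca eqxx => /(_ isT) /allP /(_ b').
  rewrite mem16P hb' Hcb' eqxx => /(_ isT) /orP[/eqP E|]; first by case: Hab'.
  move=> /allP /(_ x); rewrite mem16P hx Hcx eqxx => /(_ isT) /allP /(_ c'').
  rewrite mem16P hc'' Hbad eqxx => /(_ isT) /allP /(_ z).
  by rewrite mem16P hz Hcz eqxx => /(_ isT).
have Hde : forall z, z \in L3 -> z \in mem16 kc ++ mem16 (badO kc).
  move=> z Hz.
  have hz : (z < 16)%N := in16 HL3 Hz.
  have [w [Hw Ew]] := B3 z Hz.
  have hw : (w < 16)%N := in16 HL2 Hw.
  have Hczw : clsr z = clsr w by case: Ew => ->; rewrite ?conj_cls.
  have H1 : clsr z != goodO kc.
    by rewrite Hczw; apply/negP => /eqP E; move: Hng => /hasPn /(_ w Hw); rewrite E eqxx.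
  have H2 : clsr z != clsinv kc.
    by apply/negP => /eqP E; move: Hni => /hasPn /(_ z Hz); rewrite E eqxx.
  rewrite mem_cat !mem16P hz /=.
  exact: cls_cases2 (cls_lt hz) H1 H2.
case E3: L3 => [|d [|e L5]]; try by move: S3 hsz2; rewrite E3; case: (size L2) => [|[|[|n]]] //=.
have Hd : d \in mem16 kc ++ mem16 (badO kc) by apply: Hde; rewrite E3 mem_head.
have He : e \in mem16 kc ++ mem16 (badO kc) by apply: Hde; rewrite E3 in_cons mem_head orbT.
rewrite E3 in R123 HL3.
move: HL3; rewrite /all16 /= => /and3P[hd he HL5].
apply: (@finish L [:: a; b'; c''; d; e] L5 x certsC) => //.
have := allP checkCP kc; rewrite mem_iota add0n => /(_ hkc) /allP /(_ a).
rewrite mem16P ha Hca eqxx => /(_ isT) /allP /(_ b').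
rewrite mem16P hb' Hcb' eqxx => /(_ isT) /orP[/eqP E|]; first by case: Hab'.
move=> /allP /(_ x); rewrite mem16P hx Hcx eqxx => /(_ isT) /allP /(_ c'').
rewrite mem16P hc'' Hbad eqxx => /(_ isT) /allP /(_ d Hd) /allP /(_ e He).
by [].
Qed.


Lemma lift_list (T0 : seq M) : (forall A, A \in T0 -> exists r, (r < 16)%N /\ A = phir r) ->
  exists L, T0 = map phir L /\ all16 L.
Proof.
elim: T0 => [|A T0 IH] H; first by exists [::].
have [r [hr ->]] := H A (mem_head _ _).
have [L [-> HL]] : exists L, T0 = map phir L /\ all16 L.
  by apply: IH => B HB; apply: H; rewrite in_cons HB orbT.
by exists (r :: L); split => //; rewrite /all16 /= hr.
Qed.


Unset Implicit Arguments. Set Strict Implicit. Set Printing Implicit Defensive.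

Theorem proposition3p5 (T : seq 'M[algC]_2) (K : 'M[algC]_2 -> Prop) :
  refl_fact T -> (5 <= size T)%N -> generates T G5 ->
  (K = R1 \/ K = R1inv \/ K = R2 \/ K = R2inv) ->
  (exists a b, [/\ a != b, a \in T, b \in T, K a & K b]) ->
  forall x, K x ->
  exists T', hurwitz_equiv T T' /\
    exists rs : seq 'M[algC]_2, T' = rcons rs x /\ generates rs G5.
Proof.
move=> Hrf Hsz Hgen HK [a [b [Hab Ha Hb Ka Kb]]] x Kx.
have [L [EL HL]] : exists L, T = map phir L /\ all16 L.
  apply: lift_list => A HA; apply: lift_refl; last exact: Hrf.
  by apply/Hgen; exact: gen_in.
have [kc [hkc HKc]] := K_refl HK.
have cls_of : forall y, y \in T -> K y -> exists2 j, j \in L & (y = phir j /\ clsr j = kc).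
  move=> y; rewrite EL => /mapP[j Hj ->] Ky.
  exists j => //; split => //.
  have [r [hr hc E]] := HKc _ Ky.
  by rewrite (phir_inj (in16 HL Hj) hr E).
have [ja Hja [Ea Ca]] := cls_of a Ha Ka.
have [jb Hjb [Eb Cb]] := cls_of b Hb Kb.
have Hjab : ja <> jb by move=> E; move: Hab; rewrite Ea Eb E eqxx.
have [jx [hjx Cx Ex]] := HKc x Kx.
have Hgen' : generates (map phir L) G5 by rewrite -EL.
have Hc := other_family kc HL Hgen'.
have HszL : (5 <= size L)%N by rewrite -(size_map phir) -EL.
have [ys [R P]] := main_r hkc HL HszL Hja Hjb Hjab Ca Cb hjx Cx Hc.
have Hys : all16 ys.
  by have := reachr_all16 R HL; rewrite /all16 all_rcons => /andP[].
exists (map phir (rcons ys jx)); split.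
  by left; rewrite EL; exact: reachr_map HL R.
exists (map phir ys); split; first by rewrite map_rcons Ex.
move=> A; split; first exact: prefix_G5.
case/hasP: P => p Hp /hasP[q Hq Hpq].
exact: (pg_gen Hp Hq (in16 Hys Hp) (in16 Hys Hq) Hpq).
Qed.
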